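(* Consider DGD$^t$ started from $\mathbf{x}_0=0$. Suppose each $f_i$ is convex with $L_i$-Lipschitz gradient and attains its minimum, and $h=\sum_i f_i$ is $\mu_h$-strongly convex with unique minimizer $x^\star$. Let $L=\max_i L_i$, $\mu_{\bar f}=\mu_h/n$, $L_{\bar f}=\frac1n\sum_i L_i$, $c_2=\frac{2\mu_{\bar f}L_{\bar f}}{\mu_{\bar f}+L_{\bar f}}$, $c_4=\frac{2}{\mu_{\bar f}+L_{\bar f}}$, $D=\sqrt{2L\sum_{i=1}^n(f_i(0)-f_i^\star)}$, and let $$0<\alpha\le\min\Big\{\frac{1+\lambda_n(\mathbf{W}^t)}{L},\,c_4\Big\}.$$ Then for every $\delta>0$ and all $k=0,1,2,\ldots$, $$\|\bar x_{k+1}-x^\star\|^2\le c_1^2\|\bar x_k-x^\star\|^2+\frac{c_3^2}{(1-\beta^t)^2},$$ where $c_1^2=1-\alpha c_2+\alpha\delta-\alpha^2\delta c_2$ and $c_3^2=\alpha^3(\alpha+\delta^{-1})L^2D^2$. In particular, if $\alpha c_2<1$ and $\delta=\frac{c_2}{2(1-\alpha c_2)}$, then $c_1=\sqrt{1-\alpha c_2/2}\in(0,1)$ and for all $k\ge0$ $$\|\bar x_k-x^\star\|\le c_1^k\|\bar x_0-x^\star\|+\frac{c_3}{\sqrt{1-c_1^2}\,(1-\beta^t)},$$ the last term being $\mathcal{O}\big(\alpha/(1-\beta^t)\big)$.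
   Context: Setting: $n$ agents with convex $f_i:\mathbb{R}^p\to\mathbb{R}$, $f_i^\star=\min f_i$. $\mathbf{W}$ is a symmetric doubly-stochastic $n\times n$ matrix of a connected network ($w_{ii}>0$, $w_{ij}>0$ iff $i,j$ neighbours), with simple eigenvalue $1$ and other eigenvalues in $(-1,1)$; $\beta\in(0,1)$ is the second largest eigenvalue magnitude of $\mathbf{W}$; $\lambda_n(\mathbf{W}^t)$ is the smallest eigenvalue of $\mathbf{W}^t$. $\mathbf{Z}=\mathbf{W}\otimes I_p$. DGD$^t$ (fixed integer $t\ge1$): $\mathbf{x}_{k+1}=\mathbf{Z}^t\mathbf{x}_k-\alpha\nabla\mathbf{f}(\mathbf{x}_k)$ with $\mathbf{x}=(x_1;\ldots;x_n)$, $\nabla\mathbf{f}(\mathbf{x})=(\nabla f_1(x_1);\ldots;\nabla f_n(x_n))$. $\bar x_k=\frac1n\sum_i x_{i,k}$. *)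

(* Defs.v *)
From mathcomp Require Import all_boot.
From Stdlib Require Import Reals.
Set Implicit Arguments. Unset Strict Implicit. Unset Printing Implicit Defensive.
Open Scope R_scope.

Definition vec (p : nat) := 'I_p -> R.
Definition vzero {p} : vec p := fun _ => 0.
Definition vadd {p} (u v : vec p) : vec p := fun c => u c + v c.
Definition vsub {p} (u v : vec p) : vec p := fun c => u c - v c.
Definition vscale {p} (a : R) (u : vec p) : vec p := fun c => a * u c.
Definition dot {p} (u v : vec p) : R := \big[Rplus/0]_(c < p) (u c * v c).
Definition norm2 {p} (u : vec p) : R := dot u u.
Definition norm {p} (u : vec p) : R := sqrt (norm2 u).

Definition is_gradient {p} (f : vec p -> R) (g : vec p -> vec p) : Prop :=
  forall x eps, 0 < eps -> exists del, 0 < del /\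
    forall h : vec p, norm h < del ->
      Rabs (f (vadd x h) - f x - dot (g x) h) <= eps * norm h.

Definition convex_fun {p} (f : vec p -> R) : Prop :=
  forall x y th, 0 <= th <= 1 ->
    f (vadd (vscale th x) (vscale (1 - th) y)) <= th * f x + (1 - th) * f y.

(* mu-strong convexity (mu > 0 required separately) *)
Definition strongly_convex {p} (mu : R) (f : vec p -> R) : Prop :=
  forall x y th, 0 <= th <= 1 ->
    f (vadd (vscale th x) (vscale (1 - th) y))
      <= th * f x + (1 - th) * f y - mu / 2 * th * (1 - th) * norm2 (vsub x y).

Definition lipschitz {p} (Lc : R) (g : vec p -> vec p) : Prop :=
  forall x y, norm (vsub (g x) (g y)) <= Lc * norm (vsub x y).

Definition is_min_value {p} (f : vec p -> R) (fs : R) : Prop :=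
  (exists x, f x = fs) /\ (forall y, fs <= f y).

Definition is_minimizer {p} (f : vec p -> R) (x : vec p) : Prop :=
  forall y, f x <= f y.

Definition mat (n : nat) := 'I_n -> 'I_n -> R.
Definition mmul {n} (A B : mat n) : mat n :=
  fun i j => \big[Rplus/0]_(k < n) (A i k * B k j).
Definition mid {n} : mat n := fun i j => if i == j then 1 else 0.
Fixpoint mpow {n} (A : mat n) (t : nat) : mat n :=
  match t with O => mid | S t' => mmul A (mpow A t') end.
Definition mapply {n} (A : mat n) (v : 'I_n -> R) : 'I_n -> R :=
  fun i => \big[Rplus/0]_(j < n) (A i j * v j).

Definition is_eigenvalue {n} (A : mat n) (lam : R) : Prop :=
  exists v : 'I_n -> R, (exists i, v i <> 0) /\ forall i, mapply A v i = lam * v i.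

Definition is_min_eigenvalue {n} (A : mat n) (lam : R) : Prop :=
  is_eigenvalue A lam /\ forall mu, is_eigenvalue A mu -> lam <= mu.

Inductive w_connected {n} (W : mat n) : 'I_n -> 'I_n -> Prop :=
| wc_refl i : w_connected W i i
| wc_step i j k : i != j -> 0 < W i j -> w_connected W j k -> w_connected W i k.

Definition mixing_matrix {n} (W : mat n) : Prop :=
  (forall i j, W i j = W j i) /\
  (forall i j, 0 <= W i j) /\
  (forall i, \big[Rplus/0]_(j < n) W i j = 1) /\
  (forall j, \big[Rplus/0]_(i < n) W i j = 1) /\
  (forall i, 0 < W i i) /\
  (forall i j, w_connected W i j) /\
  (* 1 is a simple eigenvalue (W symmetric: eigenspace of 1 = span of ones) *)
  (forall v : 'I_n -> R, (forall i, mapply W v i = v i) ->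
      exists c, forall i, v i = c) /\
  (forall lam, is_eigenvalue W lam -> lam <> 1 -> -1 < lam < 1).

(* beta = second largest eigenvalue magnitude of W
        = max { |lam| : lam eigenvalue of W, lam <> 1 } (1 being simple) *)
Definition is_second_eig_mag {n} (W : mat n) (beta : R) : Prop :=
  (exists lam, is_eigenvalue W lam /\ lam <> 1 /\ Rabs lam = beta) /\
  (forall lam, is_eigenvalue W lam -> lam <> 1 -> Rabs lam <= beta).

Fixpoint dgd {n p} (W : mat n) (t : nat) (alpha : R)
    (g : 'I_n -> vec p -> vec p) (k : nat) : 'I_n -> vec p :=
  match k with
  | O => fun _ => vzero
  | S k' => let xk := dgd W t alpha g k' in
      fun i c => \big[Rplus/0]_(j < n) (mpow W t i j * xk j c)
                 - alpha * g i (xk i) c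
  end.

Definition xbar {n p} (x : 'I_n -> vec p) : vec p :=
  fun c => (\big[Rplus/0]_(i < n) x i c) / INR n.

Definition sumR {n} (F : 'I_n -> R) : R := \big[Rplus/0]_(i < n) F i.
Definition maxR {n} (F : 'I_n -> R) : R := \big[Rmax/0]_(i < n) F i.

(* Main.v *)
Require Import Defs.
From mathcomp Require Import all_boot all_algebra.
From Stdlib Require Import Reals Lra Psatz FunctionalExtensionality Classical.
From mathcomp Require Import Rstruct.
Open Scope R_scope.
Set Implicit Arguments. Unset Strict Implicit.

Lemma sum_le n (F G : 'I_n -> R) : (forall i, F i <= G i) ->
  \big[Rplus/0]_(i < n) F i <= \big[Rplus/0]_(i < n) G i.
Proof.
move=> H; apply: (big_ind2 (fun a b => a <= b)) => //; first lra.
move=> a b c d; lra.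
Qed.

Lemma sum_ge0 n (F : 'I_n -> R) : (forall i, 0 <= F i) -> 0 <= \big[Rplus/0]_(i < n) F i.
Proof. move=> H; apply: (big_ind (fun a => 0 <= a)) => //; [lra | move=> a b; lra]. Qed.

Lemma sum_eq0 n (F : 'I_n -> R) : (forall i, F i = 0) -> \big[Rplus/0]_(i < n) F i = 0.
Proof. by move=> H; apply: big1 => i _; apply: H. Qed.

Lemma sum_ge0_eq0 n (F : 'I_n -> R) : (forall i, 0 <= F i) -> \big[Rplus/0]_(i < n) F i = 0 ->
  forall i, F i = 0.
Proof.
move=> H S i; move: S; rewrite (bigD1 i) //= => S.
apply: Rle_antisym; last exact: H i.
rewrite -S -{1}(Rplus_0_r (F i)); apply: Rplus_le_compat_l.
by apply: (big_ind (fun a => 0 <= a)) => //; [lra | move=> a b; lra].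
Qed.

Lemma sum_term_le n (F : 'I_n -> R) i : (forall j, 0 <= F j) -> F i <= \big[Rplus/0]_(j < n) F j.
Proof.
move=> H; rewrite (bigD1 i) //=.
rewrite -{1}(Rplus_0_r (F i)); apply: Rplus_le_compat_l.
by apply: (big_ind (fun a => 0 <= a)) => //; [lra | move=> a b; lra].
Qed.

Lemma quad_disc a b c : 0 <= c -> (forall s, 0 <= a + 2 * b * s + c * s ^ 2) -> b ^ 2 <= a * c.
Proof.
move=> Hc H.
case: (Rle_lt_or_eq_dec 0 c Hc) => Hc'.
- have := H (- b / c). intro H1.
  have E : a + 2 * b * (- b / c) + c * (- b / c) ^ 2 = (a * c - b ^ 2) / c by field; lra.
  rewrite E in H1.
  have : 0 <= (a * c - b ^ 2) / c * c by apply: Rmult_le_pos; lra.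
  have -> : (a * c - b ^ 2) / c * c = a * c - b ^ 2 by field; lra.
  lra.
- subst c. case: (Req_dec b 0) => Hb.
  + subst b. have := H 0. nra.
  + have := H (- (a + 1) / (2 * b)).
    have -> : a + 2 * b * (- (a + 1) / (2 * b)) + 0 * (- (a + 1) / (2 * b)) ^ 2 = -1 by field.
    lra.
Qed.

Lemma sum_lin2 n a b (F G : 'I_n -> R) :
  \big[Rplus/0]_(i < n) (a * F i + b * G i) = a * \big[Rplus/0]_(i < n) F i + b * \big[Rplus/0]_(i < n) G i.
Proof. by rewrite big_split /= -!big_distrr. Qed.

Lemma sum_lin3 n a b c (F G H : 'I_n -> R) :
  \big[Rplus/0]_(i < n) (a * F i + b * G i + c * H i) =
  a * \big[Rplus/0]_(i < n) F i + b * \big[Rplus/0]_(i < n) G i + c * \big[Rplus/0]_(i < n) H i.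
Proof. by rewrite !big_split /= -!big_distrr. Qed.

Lemma vext p (u v : vec p) : (forall c, u c = v c) -> u = v.
Proof. move=> H; apply: functional_extensionality => c; exact: H. Qed.

Lemma norm2_ge0 p (u : vec p) : 0 <= norm2 u.
Proof. apply: sum_ge0 => c; nra. Qed.

Lemma dotC p (u v : vec p) : dot u v = dot v u.
Proof. apply: eq_bigr => c _; ring. Qed.

Lemma norm2_lin p (u v : vec p) s :
  norm2 (fun c => u c + s * v c) = norm2 u + 2 * dot u v * s + norm2 v * s ^ 2.
Proof.
rewrite /norm2 /dot.
rewrite (eq_bigr (fun c => 1 * (u c * u c) + (2 * s) * (u c * v c) + (s ^ 2) * (v c * v c))).
  rewrite sum_lin3; ring.
move=> c _; ring.
Qed.

Lemma CS2 p (u v : vec p) : dot u v ^ 2 <= norm2 u * norm2 v.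
Proof.
apply: quad_disc; first exact: norm2_ge0.
move=> s; rewrite -norm2_lin; apply: norm2_ge0.
Qed.

Lemma norm_ge0 p (u : vec p) : 0 <= norm u.
Proof. apply: sqrt_pos. Qed.

Lemma norm_sq p (u : vec p) : norm u ^ 2 = norm2 u.
Proof. rewrite /norm /= Rmult_1_r sqrt_sqrt //; exact: norm2_ge0. Qed.

Lemma CS p (u v : vec p) : dot u v <= norm u * norm v.
Proof.
have H := CS2 u v.
have H1 := norm_ge0 u. have H2 := norm_ge0 v.
have : (dot u v) ^ 2 <= (norm u * norm v) ^ 2 by rewrite Rpow_mult_distr !norm_sq.
move=> H3.
case: (Rle_or_lt (dot u v) 0) => Hd; first nra.
have H4 : 0 <= norm u * norm v by nra.
nra.
Qed.

Lemma norm2_scale p a (d : vec p) : norm2 (vscale a d) = a ^ 2 * norm2 d.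
Proof.
rewrite /norm2 /dot /vscale big_distrr /=; apply: eq_bigr => c _; ring.
Qed.

Lemma norm_scale p a (d : vec p) : norm (vscale a d) = Rabs a * norm d.
Proof.
rewrite /norm norm2_scale sqrt_mult; last exact: norm2_ge0; last nra.
by rewrite -sqrt_Rsqr_abs /Rsqr /= Rmult_1_r.
Qed.

Lemma dot_scaler p a (u d : vec p) : dot u (vscale a d) = a * dot u d.
Proof. rewrite /dot /vscale big_distrr /=; apply: eq_bigr => c _; ring. Qed.

Lemma dot_subl p (u v d : vec p) : dot (vsub u v) d = dot u d - dot v d.
Proof.
rewrite /dot /vsub (eq_bigr (fun c => 1 * (u c * d c) + (-1) * (v c * d c))).
  rewrite sum_lin2; ring.
move=> c _; ring.
Qed.

Lemma line_shift p (x d : vec p) s h :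
  vadd x (vscale (s + h) d) = vadd (vadd x (vscale s d)) (vscale h d).
Proof. apply: vext => c; rewrite /vadd /vscale; ring. Qed.

Lemma line_deriv p (f : vec p -> R) g x d s : is_gradient f g ->
  derivable_pt_lim (fun s => f (vadd x (vscale s d))) s
    (dot (g (vadd x (vscale s d))) d).
Proof.
move=> Hg eps Heps.
set z := vadd x (vscale s d).
have HN := norm_ge0 d.
have He' : 0 < eps / (2 * (norm d + 1)) by apply: Rdiv_lt_0_compat; lra.
have [del [Hdel H]] := Hg z _ He'.
have Hdp : 0 < del / (norm d + 1) by apply: Rdiv_lt_0_compat; lra.
exists (mkposreal _ Hdp) => h Hh0 Hh /=.
rewrite line_shift -/z.
have Hnh : norm (vscale h d) < del.
  rewrite norm_scale.
  have Hah : 0 < Rabs h by apply: Rabs_pos_lt.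
  have : Rabs h * (norm d + 1) < del.
    have E : del / (norm d + 1) * (norm d + 1) = del by field; lra.
    rewrite -[X in _ < X]E; apply: Rmult_lt_compat_r; [lra | exact: Hh].
  nra.
have H1 := H _ Hnh.
rewrite norm_scale dot_scaler in H1.
have Hah : 0 < Rabs h by apply: Rabs_pos_lt.
have E : (f (vadd z (vscale h d)) - f z) / h - dot (g z) d =
         (f (vadd z (vscale h d)) - f z - h * dot (g z) d) / h by field.
rewrite E /Rdiv Rabs_mult Rabs_inv -/(Rdiv _ _).
apply: (Rle_lt_trans _ (eps / (2 * (norm d + 1)) * norm d)).
  apply: (Rmult_le_reg_r (Rabs h)) => //.
  rewrite /Rdiv Rmult_assoc Rinv_l; last lra.
  rewrite Rmult_1_r; nra.
have : eps / (2 * (norm d + 1)) * norm d * (2 * (norm d + 1)) = eps * norm d by field; lra.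
move=> E2.
apply: (Rmult_lt_reg_r (2 * (norm d + 1))); first lra.
rewrite E2. nra.
Qed.

Lemma conv1d (phi : R -> R) D k : derivable_pt_lim phi 0 D ->
  (forall th, 0 < th <= 1 -> phi th <= (1 - th) * phi 0 + th * phi 1 - k * th * (1 - th)) ->
  D <= phi 1 - phi 0 - k.
Proof.
move=> Hd H.
apply: Rnot_lt_le => Hlt.
set gap := D - (phi 1 - phi 0 - k).
have Hgap : 0 < gap by rewrite /gap; lra.
have [del Hdel] := Hd (gap / 2) ltac:(lra).
have Hdp := cond_pos del.
have Hk : 0 < gap / (4 * (Rabs k + 1)) by apply: Rdiv_lt_0_compat; [lra | have := Rabs_pos k; lra].
set th := Rmin (del / 2) (Rmin 1 (gap / (4 * (Rabs k + 1)))).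
have Hth0 : 0 < th.
  rewrite /th; apply: Rmin_pos; first lra; apply: Rmin_pos; lra.
have Hth1 : th <= 1 by rewrite /th; apply: (Rle_trans _ _ _ (Rmin_r _ _)); apply: Rmin_l.
have Hthd : th < del by rewrite /th; apply: (Rle_lt_trans _ _ _ (Rmin_l _ _)); lra.
have Hthk : th <= gap / (4 * (Rabs k + 1)).
  by rewrite /th; apply: (Rle_trans _ _ _ (Rmin_r _ _)); apply: Rmin_r.
have H1 := Hdel th ltac:(lra) ltac:(rewrite Rabs_pos_eq; lra).
rewrite Rplus_0_l in H1.
have H2 := H th (conj Hth0 Hth1).
have Hq : (phi th - phi 0) / th <= phi 1 - phi 0 - k + k * th.
  apply: (Rmult_le_reg_r th) => //.
  have -> : (phi th - phi 0) / th * th = phi th - phi 0 by field; lra.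
  nra.
have Hkth : k * th <= gap / 4.
  have Hab := Rabs_pos k.
  have : Rabs k * th <= Rabs k * (gap / (4 * (Rabs k + 1))) by apply: Rmult_le_compat_l.
  have : Rabs k * (gap / (4 * (Rabs k + 1))) <= gap / 4.
    apply: (Rmult_le_reg_r (4 * (Rabs k + 1))); first lra.
    have -> : Rabs k * (gap / (4 * (Rabs k + 1))) * (4 * (Rabs k + 1)) = Rabs k * gap by field; lra.
    have -> : gap / 4 * (4 * (Rabs k + 1)) = gap * (Rabs k + 1) by field.
    nra.
  have := Rle_abs k. nra.
have := Rabs_def2 _ _ H1. rewrite /gap in Hkth Hgap *. lra.
Qed.

Lemma conv_comb p th (x y : vec p) :
  vadd (vscale th y) (vscale (1 - th) x) = vadd x (vscale th (vsub y x)).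
Proof. apply: vext => c; rewrite /vadd /vscale /vsub; ring. Qed.

Lemma line0 p (x d : vec p) : vadd x (vscale 0 d) = x.
Proof. apply: vext => c; rewrite /vadd /vscale; ring. Qed.

Lemma line1 p (x y : vec p) : vadd x (vscale 1 (vsub y x)) = y.
Proof. apply: vext => c; rewrite /vadd /vscale /vsub; ring. Qed.

Lemma first_order p (h : vec p -> R) (D : vec p -> vec p -> R) mu x y :
  derivable_pt_lim (fun s => h (vadd x (vscale s (vsub y x)))) 0 (D x y) ->
  strongly_convex mu h ->
  h x + D x y + mu / 2 * norm2 (vsub y x) <= h y.
Proof.
move=> Hd Hsc.
have := conv1d (k := mu / 2 * norm2 (vsub y x)) Hd.
rewrite line0 line1.
have N : norm2 (vsub y x) = norm2 (vsub y x) by [].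
move=> H; suff : D x y <= h y - h x - mu / 2 * norm2 (vsub y x) by lra.
apply: H => th Hth.
rewrite -conv_comb.
have := Hsc y x th ltac:(lra). lra.
Qed.

Lemma convex_sc p (f : vec p -> R) : convex_fun f -> strongly_convex 0 f.
Proof. move=> H x y th Hth; have := H x y th Hth; lra. Qed.

Lemma first_order_conv p (f : vec p -> R) g x y : is_gradient f g -> convex_fun f ->
  f x + dot (g x) (vsub y x) <= f y.
Proof.
move=> Hg Hc.
have Hd := line_deriv x (vsub y x) 0 Hg. rewrite line0 in Hd.
have := first_order (D := fun x y => dot (g x) (vsub y x)) Hd (convex_sc Hc).
lra.
Qed.

Lemma descent p (f : vec p -> R) g Lc x y : is_gradient f g -> lipschitz Lc g -> 0 <= Lc ->
  f y <= f x + dot (g x) (vsub y x) + Lc / 2 * norm2 (vsub y x).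
Proof.
move=> Hg HL HL0.
set d := vsub y x.
set N := norm2 d.
pose psi s := f (vadd x (vscale s d)) - s * dot (g x) d - Lc / 2 * (s * s) * N.
pose psi' s := dot (g (vadd x (vscale s d))) d - dot (g x) d - Lc / 2 * (2 * s) * N.
have Hder : forall s, derivable_pt_lim psi s (psi' s).
  move=> s; rewrite /psi /psi'.
  apply: (derivable_pt_lim_minus (fun s => f (vadd x (vscale s d)) - s * dot (g x) d)
             (fun s => Lc / 2 * (s * s) * N)).
    apply: (derivable_pt_lim_minus (fun s => f (vadd x (vscale s d))) (fun s => s * dot (g x) d)).
      exact: line_deriv.
    have := derivable_pt_lim_scal id (dot (g x) d) s 1 (derivable_pt_lim_id s).
    rewrite /mult_real_fct /id => H e He; have [dl Hdl] := H e He; exists dl => h Hh Hh2.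
    have := Hdl h Hh Hh2. by rewrite Rmult_1_r (Rmult_comm (s + h)) (Rmult_comm s).
  have := derivable_pt_lim_scal Rsqr (Lc / 2 * N) s (2 * s) (derivable_pt_lim_Rsqr s).
  rewrite /mult_real_fct /Rsqr => H e He; have [dl Hdl] := H e He; exists dl => h Hh Hh2.
  have := Hdl h Hh Hh2.
  have -> : Lc / 2 * ((s + h) * (s + h)) * N = Lc / 2 * N * ((s + h) * (s + h)) by ring.
  have -> : Lc / 2 * (s * s) * N = Lc / 2 * N * (s * s) by ring.
  have -> : Lc / 2 * (2 * s) * N = Lc / 2 * N * (2 * s) by ring.
  by [].
have [c [Hc Hc01]] := MVT_cor2 psi psi' 0 1 Rlt_0_1 (fun c _ => Hder c).
have Hp : psi' c <= 0.
  rewrite /psi' -dot_subl.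
  have H1 := CS (vsub (g (vadd x (vscale c d))) (g x)) d.
  have H2 := HL (vadd x (vscale c d)) x.
  have E : vsub (vadd x (vscale c d)) x = vscale c d.
    apply: vext => i; rewrite /vsub /vadd /vscale; ring.
  rewrite E in H2.
  rewrite norm_scale Rabs_pos_eq in H2; last lra.
  have HNd := norm_ge0 d.
  have HN : norm d * norm d = N by rewrite /N -norm_sq /=; ring.
  have H3 : norm (vsub (g (vadd x (vscale c d))) (g x)) * norm d <= Lc * (c * norm d) * norm d.
    by apply: Rmult_le_compat_r.
  nra.
have E1 : psi 1 = f y - dot (g x) d - Lc / 2 * N.
  rewrite /psi line1; ring.
have E0 : psi 0 = f x.
  rewrite /psi line0; ring.
rewrite E1 E0 in Hc. nra.
Qed.

Lemma dot_subr p (u a b : vec p) : dot u (vsub a b) = dot u a - dot u b.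
Proof. rewrite dotC dot_subl (dotC a) (dotC b) //. Qed.
Lemma dot_scalel p k (u d : vec p) : dot (vscale k u) d = k * dot u d.
Proof. by rewrite dotC dot_scaler dotC. Qed.
Lemma dot_addl p (u v d : vec p) : dot (vadd u v) d = dot u d + dot v d.
Proof.
rewrite /dot /vadd (eq_bigr (fun c => 1 * (u c * d c) + 1 * (v c * d c))).
  rewrite sum_lin2; ring.
move=> c _; ring.
Qed.
Lemma dot_addr p (u v d : vec p) : dot d (vadd u v) = dot d u + dot d v.
Proof. by rewrite dotC dot_addl ?(dotC d). Qed.

Ltac dexp := rewrite ?/norm2; repeat progress rewrite ?dot_subr ?dot_subl ?dot_addr ?dot_addl ?dot_scaler ?dot_scalel.

Lemma real_limit l a b : 0 <= l -> (forall c, 0 < c -> l <= c -> b <= c * a) -> b <= l * a.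
Proof.
move=> Hl H.
case: (Rle_lt_or_eq_dec 0 l Hl) => Hl'; first by apply: H; lra.
subst l. rewrite Rmult_0_l.
apply: Rnot_lt_le => Hb.
case: (Rle_or_lt a 0) => Ha.
  have := H 1 Rlt_0_1 ltac:(lra). nra.
have := H (b / (2 * a)) ltac:(apply: Rdiv_lt_0_compat; lra) ltac:(apply: Rlt_le; apply: Rdiv_lt_0_compat; lra).
have -> : b / (2 * a) * a = b / 2 by field; lra.
lra.
Qed.

Lemma cocoercive p (psi : vec p -> R) (Psi : vec p -> vec p) c : 0 < c ->
  (forall x y, psi x + dot (Psi x) (vsub y x) <= psi y) ->
  (forall x y, psi y <= psi x + dot (Psi x) (vsub y x) + c / 2 * norm2 (vsub y x)) ->
  forall x y, norm2 (vsub (Psi x) (Psi y)) <= c * dot (vsub (Psi x) (Psi y)) (vsub x y).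
Proof.
move=> Hc Hfo Hde.
have C3 : forall x y, psi x + dot (Psi x) (vsub y x) + / (2 * c) * norm2 (vsub (Psi y) (Psi x)) <= psi y.
  move=> x y.
  set w := vsub (Psi y) (Psi x).
  set z := vsub y (vscale (/ c) w).
  have H1 := Hfo x z. have H2 := Hde y z.
  move: H1 H2; rewrite /z /w; dexp.
  move=> H1 H2.
  set a1 := dot (Psi x) y in H1 H2 *.
  have Hk : / c * c = 1 by field; lra.
  have Hci : 0 < / c by apply: Rinv_0_lt_compat.
  rewrite ?(dotC (Psi y) (Psi x)) in H1 H2 *.
  rewrite ?(dotC y (Psi y)) ?(dotC x (Psi y)) ?(dotC y (Psi x)) ?(dotC x (Psi x)) in H1 H2 *.
  have E : / (2 * c) = / c / 2 by field; lra.
  rewrite E.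
  set Q := (dot (Psi y) (Psi y) - _ - _) in H1 H2 *.
  have HQ : c / 2 * (/ c * (/ c * Q)) = / c / 2 * Q by field; lra.
  set k := / c in H1 H2 HQ Hk Hci E *.
  set S := psi (vsub y _) in H1 H2.
  move: H2; set T := (c / 2 * _) => H2.
  have E3 : T = k / 2 * Q by rewrite /T -HQ; ring.
  rewrite E3 in H2. rewrite /Q in H2 *. nra.
move=> x y.
have H1 := C3 x y. have H2 := C3 y x.
move: H1 H2; dexp => H1 H2.
rewrite ?(dotC (Psi y) (Psi x)) ?(dotC y (Psi y)) ?(dotC x (Psi y)) ?(dotC y (Psi x)) ?(dotC x (Psi x)) in H1 H2 *.
have Hci : 0 < / (2 * c) by apply: Rinv_0_lt_compat; lra.
have E : c * / (2 * c) = / 2 by field; lra.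
set Q := (dot (Psi x) (Psi x) - _ - _).
have EQ : dot (Psi y) (Psi y) - dot (Psi x) (Psi y) - (dot (Psi x) (Psi y) - dot (Psi x) (Psi x)) = Q by rewrite /Q; ring.
rewrite EQ in H1.
set Rr := (dot (Psi x) x - _ - _).
set k := / (2 * c) in H1 H2 Hci E.
have H3 : k * (2 * Q) <= Rr by rewrite /Rr; nra.
have : c * (k * (2 * Q)) <= c * Rr by apply: Rmult_le_compat_l; lra.
have -> : c * (k * (2 * Q)) = Q by rewrite -Rmult_assoc E; field.
done.
Qed.

Lemma real_final m Lq a X A Gn : 0 < m -> m <= Lq -> 0 < a -> a <= 2 / (m + Lq) -> 0 <= X -> 0 <= Gn ->
  Gn - 2 * m * A + m ^ 2 * X <= (Lq - m) * (A - m * X) ->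
  X - 2 * a * A + a ^ 2 * Gn <= (1 - a * (2 * m * Lq / (m + Lq))) * X.
Proof.
move=> Hm HL Ha Has HX HG H.
set s := m + Lq in Has *.
have Hs : 0 < s by rewrite /s; lra.
have H1 : Gn <= s * A - m * Lq * X by rewrite /s; nra.
have H2 : m * Lq * X <= s * A by nra.
have H3 : 0 <= 2 - a * s.
  have : a * s <= 2 / s * s by apply: Rmult_le_compat_r; lra.
  have -> : 2 / s * s = 2 by field; lra.
  lra.
have H4 : a * (m * Lq * X) * (2 - a * s) <= a * (s * A) * (2 - a * s).
  apply: Rmult_le_compat_r => //; apply: Rmult_le_compat_l; lra.
have H5 : a ^ 2 * Gn <= a ^ 2 * (s * A - m * Lq * X) by apply: Rmult_le_compat_l; nra.
have E : (1 - a * (2 * m * Lq / s)) * X * s = X * s - 2 * a * m * Lq * X by field; lra.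
apply: (Rmult_le_reg_r s) => //.
rewrite E.
nra.
Qed.

Lemma vzero_dotl p (u : vec p) : dot vzero u = 0.
Proof. apply: sum_eq0 => c; rewrite /vzero; ring. Qed.

Lemma vzero_dotr p (u : vec p) : dot u vzero = 0.
Proof. apply: sum_eq0 => c; rewrite /vzero; ring. Qed.

Lemma norm2_eq0 p (u : vec p) : norm2 u = 0 -> u = vzero.
Proof.
move=> H; apply: vext => c.
have := sum_ge0_eq0 (F := fun c => u c * u c) (fun c => ltac:(nra)) H c.
rewrite /vzero; nra.
Qed.

Lemma contraction p (phi : vec p -> R) (Gam : vec p -> vec p) m Lq xs x a :
  0 < m -> 0 < Lq ->
  (forall x y, phi x + dot (Gam x) (vsub y x) + m / 2 * norm2 (vsub y x) <= phi y) ->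
  (forall x y, phi y <= phi x + dot (Gam x) (vsub y x) + Lq / 2 * norm2 (vsub y x)) ->
  Gam xs = vzero -> 0 < a -> a <= 2 / (m + Lq) ->
  norm2 (vsub (vsub x (vscale a (Gam x))) xs) <= (1 - a * (2 * m * Lq / (m + Lq))) * norm2 (vsub x xs).
Proof.
move=> Hm HLq Hsfo Hde G0 Ha Has.
have HX := norm2_ge0 (vsub x xs).
case: (Rle_lt_or_eq_dec 0 _ HX) => HX'; last first.
  have Exs : x = xs.
    have := norm2_eq0 (esym HX') => H; apply: vext => c.
    have := f_equal (fun u => u c) H; rewrite /vsub /vzero /=; lra.
  subst x. rewrite G0 -HX' Rmult_0_r.
  apply: Req_le; apply: sum_eq0 => c; rewrite /vsub /vscale /vzero; ring.
have HmL : m <= Lq.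
  have H1 := Hsfo xs x. have H2 := Hde xs x. nra.
pose psi z := phi z - m / 2 * norm2 z.
pose Psi z := vsub (Gam z) (vscale m z).
have Hfo : forall x y, psi x + dot (Psi x) (vsub y x) <= psi y.
  move=> x1 y1; have := Hsfo x1 y1; rewrite /psi /Psi; dexp.
  rewrite ?(dotC x1 y1) ?(dotC y1 (Gam x1)) ?(dotC x1 (Gam x1)); nra.
have Hcoc : forall c, 0 < c -> Lq - m <= c ->
    norm2 (vsub (Psi x) (Psi xs)) <= c * dot (vsub (Psi x) (Psi xs)) (vsub x xs).
  move=> c Hc Hcl; apply: cocoercive => //.
  move=> x1 y1; have := Hde x1 y1; have := norm2_ge0 (vsub y1 x1).
  rewrite /psi /Psi; dexp.
  rewrite ?(dotC x1 y1) ?(dotC y1 (Gam x1)) ?(dotC x1 (Gam x1)); nra.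
have Hl := real_limit (l := Lq - m) ltac:(lra) Hcoc.
have := real_final (A := dot (Gam x) (vsub x xs)) (Gn := norm2 (Gam x)) Hm HmL Ha Has HX (norm2_ge0 _).
move: Hl; rewrite /Psi G0; dexp. rewrite ?vzero_dotl ?vzero_dotr.
rewrite ?(dotC x xs) ?(dotC xs (Gam x)) ?(dotC x (Gam x)).
move=> Hl Hf. have := Hf ltac:(lra). lra.
Qed.

Lemma mapply_mmul n (A B : mat n) u i : mapply (mmul A B) u i = mapply A (mapply B u) i.
Proof.
rewrite /mapply /mmul.
transitivity (\big[Rplus/0]_(j < n) \big[Rplus/0]_(k < n) (A i k * B k j * u j)).
  by apply: eq_bigr => j _; rewrite big_distrl.
rewrite exchange_big /=; apply: eq_bigr => k _; rewrite big_distrr /=.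
apply: eq_bigr => j _; ring.
Qed.

Lemma dot_mapply_sym n (M : mat n) u v : (forall i j, M i j = M j i) ->
  dot u (mapply M v) = dot (mapply M u) v.
Proof.
move=> HM; rewrite /dot /mapply.
transitivity (\big[Rplus/0]_(i < n) \big[Rplus/0]_(j < n) (u i * M i j * v j)).
  by apply: eq_bigr => i _; rewrite big_distrr; apply: eq_bigr => j _ /=; ring.
rewrite exchange_big /=; apply: eq_bigr => j _; rewrite big_distrl /=.
apply: eq_bigr => i _; rewrite HM; ring.
Qed.

Lemma mapply_lin n (M : mat n) u v s i :
  mapply M (fun j => u j + s * v j) i = mapply M u i + s * mapply M v i.
Proof.
rewrite /mapply (eq_bigr (fun j => 1 * (M i j * u j) + s * (M i j * v j))).
  by rewrite sum_lin2; ring.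
move=> j _; ring.
Qed.

Definition K2 n (C : mat n) := \big[Rplus/0]_(i < n) norm2 (C i).

Lemma K2_ge0 n (C : mat n) : 0 <= K2 C.
Proof. apply: sum_ge0 => i; exact: norm2_ge0. Qed.

Lemma rowbound n (C : mat n) w : norm2 (mapply C w) <= K2 C * norm2 w.
Proof.
rewrite /K2 big_distrl /=; apply: sum_le => i.
have := CS2 (C i) w. rewrite /mapply /dot /=. nra.
Qed.

Lemma quadbound n (M : mat n) u : Rabs (dot u (mapply M u)) <= sqrt (K2 M) * norm2 u.
Proof.
have H1 := CS2 u (mapply M u).
have H2 := rowbound M u.
have H3 := norm2_ge0 u. have H4 := K2_ge0 M.
have Hs := sqrt_pos (K2 M). have Hs2 := sqrt_sqrt _ H4.
apply: Rsqr_incr_0_var; last nra.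
rewrite -Rsqr_abs /Rsqr. nra.
Qed.

Lemma sum_delta n (i : 'I_n) a (u : 'I_n -> R) :
  \big[Rplus/0]_(j < n) ((if i == j then a else 0) * u j) = a * u i.
Proof.
rewrite (bigD1 i) //= eqxx big1; first ring.
by move=> j /negbTE; rewrite eq_sym => ->; ring.
Qed.

Lemma mapply_shift n (M : mat n) a u i :
  mapply (fun i j => M i j - (if i == j then a else 0)) u i = mapply M u i - a * u i.
Proof.
rewrite /mapply (eq_bigr (fun j => 1 * (M i j * u j) + (-1) * ((if i == j then a else 0) * u j))).
  by rewrite sum_lin2 sum_delta; ring.
move=> j _; ring.
Qed.

Lemma inv_exists n (B : mat n) : (forall i j, B i j = B j i) ->
  (forall v : 'I_n -> R, (forall i, mapply B v i = 0) -> forall i, v i = 0) ->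
  exists C : mat n, forall u i, mapply C (mapply B u) i = u i.
Proof.
move=> HS H.
pose BM := (matrix_of_fun matrix_key (fun i j => B i j) : 'M[R]_n).
have Hdet : determinant BM != 0.
  apply/negP => /det0P [v vN0 vB0].
  have Hv := H (fun i => v ord0 i).
  move/negP: vN0; apply; apply/eqP/rowP => i.
  rewrite [RHS]mxE; apply: Hv => j.
  move/matrixP: vB0 => /(_ ord0 j); rewrite !mxE /mapply => E.
  etransitivity; last exact E.
  apply: eq_bigr => k _; rewrite /BM mxE HS; apply: Rmult_comm.
have Hu : BM \in unitmx by rewrite unitmxE GRing.unitfE.
have HI := mulVmx Hu.
have Hent : forall i j, mmul (fun i j => invmx BM i j) B i j = if i == j then 1 else 0.
  move=> i j.
  transitivity ((mulmx (invmx BM) BM) i j).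
    rewrite mxE /mmul; apply: eq_bigr => k _; rewrite mxE; reflexivity.
  rewrite HI mxE; by case: (i == j).
exists (fun i j => invmx BM i j) => u i.
rewrite -mapply_mmul /mapply (bigD1 i) //= Hent eqxx big1.
  ring.
move=> j /negbTE Hj; rewrite Hent eq_sym Hj; ring.
Qed.

Lemma dot_linl p (u v w : vec p) s : dot (fun j => u j + s * v j) w = dot u w + s * dot v w.
Proof.
rewrite /dot (eq_bigr (fun c => 1 * (u c * w c) + s * (v c * w c))); first by rewrite sum_lin2; ring.
move=> c _; ring.
Qed.
Lemma dot_linr p (u v w : vec p) s : dot w (fun j => u j + s * v j) = dot w u + s * dot w v.
Proof. by rewrite dotC dot_linl !(dotC w). Qed.

Lemma psd_cs n (B : mat n) u v : (forall i j, B i j = B j i) ->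
  (forall w, 0 <= dot w (mapply B w)) ->
  dot u (mapply B v) ^ 2 <= dot u (mapply B u) * dot v (mapply B v).
Proof.
move=> HS Hpsd.
apply: quad_disc; first exact: Hpsd.
move=> s.
have := Hpsd (fun j => u j + s * v j).
have E : mapply B (fun j => u j + s * v j) = (fun j => mapply B u j + s * mapply B v j).
  by apply: functional_extensionality => j; rewrite mapply_lin.
rewrite E.
have E2 : dot (fun j => u j + s * v j) (fun j => mapply B u j + s * mapply B v j) =
  dot u (mapply B u) + 2 * dot u (mapply B v) * s + dot v (mapply B v) * s ^ 2.
  have Hsym : dot v (mapply B u) = dot u (mapply B v) by rewrite dot_mapply_sym // dotC.
  rewrite dot_linl !dot_linr Hsym. ring.
rewrite E2; lra.
Qed.

Lemma spec_min n (M : mat n) : (0 < n)%nat -> (forall i j, M i j = M j i) ->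
  exists mu, is_eigenvalue M mu /\ forall u, mu * norm2 u <= dot u (mapply M u).
Proof.
move=> Hn HS.
set K := sqrt (K2 M).
have HK : 0 <= K := sqrt_pos (K2 M).
pose q u := dot u (mapply M u).
pose F := fun r => exists u, 0 < norm2 u /\ r = - (q u / norm2 u).
have Fb : bound F.
  exists K => r [u [Hu ->]].
  have H1 := quadbound M u. rewrite -/K -/(q u) in H1.
  have H2 := Rle_abs (- q u). rewrite Rabs_Ropp in H2.
  apply: (Rmult_le_reg_r (norm2 u)) => //.
  have -> : - (q u / norm2 u) * norm2 u = - q u by field; lra.
  lra.
pose i0 := Ordinal Hn.
pose e := fun j : 'I_n => if j == i0 then 1 else 0.
have He : 0 < norm2 e.
  have := sum_term_le (F := fun c => e c * e c) i0 (fun c => ltac:(nra)).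
  rewrite /e eqxx /norm2 /dot. lra.
have Fne : exists r, F r by exists (- (q e / norm2 e)); exists e.
have [s Hs] := completeness F Fb Fne.
set mu := - s.
have Ha : forall u, 0 < norm2 u -> mu * norm2 u <= q u.
  move=> u Hu.
  have := proj1 Hs (- (q u / norm2 u)) (ex_intro _ u (conj Hu erefl)).
  move=> H1.
  have : mu <= q u / norm2 u by rewrite /mu; lra.
  move=> H2.
  have := Rmult_le_compat_r (norm2 u) _ _ (Rlt_le _ _ Hu) H2.
  have -> : q u / norm2 u * norm2 u = q u by field; lra.
  done.
have Hall : forall u, mu * norm2 u <= q u.
  move=> u; case: (Rle_lt_or_eq_dec 0 _ (norm2_ge0 u)) => Hu; first exact: Ha.
  have := norm2_eq0 (esym Hu) => Hz. rewrite -Hu /q Hz vzero_dotl. lra.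
have Happrox : forall eps, 0 < eps -> exists u, 0 < norm2 u /\ q u < (mu + eps) * norm2 u.
  move=> eps Heps; apply: NNPP => Hne.
  have H' : forall u, 0 < norm2 u -> (mu + eps) * norm2 u <= q u.
    move=> u Hu; apply: Rnot_lt_le => Hlt; apply: Hne; exists u; split => //.
  have Hub : is_upper_bound F (s - eps).
    move=> r [u [Hu ->]].
    have := H' u Hu => H1.
    have : mu + eps <= q u / norm2 u.
      apply: (Rmult_le_reg_r (norm2 u)) => //.
      have -> : q u / norm2 u * norm2 u = q u by field; lra.
      done.
    rewrite /mu; lra.
  have := proj2 Hs _ Hub. lra.
pose B := fun i j : 'I_n => M i j - (if i == j then mu else 0).
have HBapp : forall u, mapply B u = (fun i => mapply M u i + (- mu) * u i).
  move=> u; apply: functional_extensionality => i; rewrite /B mapply_shift; ring.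
have HqB : forall u, dot u (mapply B u) = q u - mu * norm2 u.
  move=> u; rewrite HBapp dot_linr /q /norm2; ring.
have HSB : forall i j, B i j = B j i by move=> i j; rewrite /B HS eq_sym.
have Hpsd : forall w, 0 <= dot w (mapply B w) by move=> w; rewrite HqB; have := Hall w; lra.
set KB := sqrt (K2 B).
have HKB : 0 <= KB := sqrt_pos (K2 B).
have Hkey : forall u, norm2 (mapply B u) <= KB * dot u (mapply B u).
  move=> u.
  have H1 := psd_cs u (mapply B u) HSB Hpsd.
  rewrite dot_mapply_sym // in H1.
  have H2 := quadbound B (mapply B u). rewrite -/KB in H2.
  have H3 := Rle_abs (dot (mapply B u) (mapply B (mapply B u))).
  have H4 := Hpsd u. have H5 := norm2_ge0 (mapply B u).
  set N := norm2 (mapply B u) in H1 H2 H5 *.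
  change (dot (mapply B u) (mapply B u)) with N in H1.
  set Q := dot u (mapply B u) in H1 H4 *.
  set Q2 := dot (mapply B u) (mapply B (mapply B u)) in H1 H2 H3.
  case: (Rle_lt_or_eq_dec 0 N H5) => HN; last by rewrite -HN; nra.
  have : N ^ 2 <= Q * (KB * N) by nra.
  move=> H6. apply: (Rmult_le_reg_r N) => //. nra.
have [v [Hv0 Hv]] : exists v : 'I_n -> R, (exists i, v i <> 0) /\ forall i, mapply B v i = 0.
  apply: NNPP => Hns.
  have Hinj : forall v, (forall i, mapply B v i = 0) -> forall i, v i = 0.
    move=> v Hv i; apply: NNPP => Hvi; apply: Hns; by exists v; split => //; exists i.
  have [Cm HC] := inv_exists HSB Hinj.
  have HK2C := K2_ge0 Cm.
  set eps := / (K2 Cm * KB + 1).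
  have Heps : 0 < eps by apply: Rinv_0_lt_compat; nra.
  have [u [Hu Hq]] := Happrox eps Heps.
  have E : u = mapply Cm (mapply B u) by apply: functional_extensionality => i; rewrite HC.
  have H1 : norm2 u <= K2 Cm * norm2 (mapply B u) by rewrite {1}E; apply: rowbound.
  have H2 := Hkey u. rewrite HqB in H2.
  have H3 : q u - mu * norm2 u < eps * norm2 u by lra.
  have H4 : norm2 u <= K2 Cm * KB * (q u - mu * norm2 u).
    apply: (Rle_trans _ _ _ H1). rewrite Rmult_assoc. apply: Rmult_le_compat_l => //.
  have H5 : (K2 Cm * KB) * eps < 1.
    rewrite /eps. apply: (Rmult_lt_reg_r (K2 Cm * KB + 1)); first nra.
    rewrite Rmult_assoc Rinv_l; last nra. nra.
  have H6 : K2 Cm * KB * (q u - mu * norm2 u) <= K2 Cm * KB * (eps * norm2 u).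
    apply: Rmult_le_compat_l; [nra | lra].
  nra.
exists mu; split; last exact: Hall.
exists v; split => // i.
have := Hv i; rewrite /B mapply_shift; lra.
Qed.

Lemma sum_const n c : \big[Rplus/0]_(i < n) c = INR n * c.
Proof.
elim: n => [|n IH]; first by rewrite big_ord0 /=; ring.
rewrite big_ord_recr /= IH; rewrite ?S_INR; destruct n; simpl; ring.
Qed.

Lemma sum_mapply n (M : mat n) u :
  \big[Rplus/0]_(i < n) mapply M u i = \big[Rplus/0]_(j < n) ((\big[Rplus/0]_(i < n) M i j) * u j).
Proof.
rewrite /mapply exchange_big /=; apply: eq_bigr => j _; rewrite big_distrl //.
Qed.

Lemma mapply_mid n (u : 'I_n -> R) i : mapply mid u i = u i.
Proof. rewrite /mapply /mid sum_delta; ring. Qed.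

Lemma mapply_mpow n (W : mat n) t u : mapply (mpow W t) u = iter t (mapply W) u.
Proof.
elim: t => [|t IH] /=; first by apply: functional_extensionality => i; rewrite mapply_mid.
apply: functional_extensionality => i; rewrite mapply_mmul IH //.
Qed.

Lemma iter_sym n (W : mat n) t u v : (forall i j, W i j = W j i) ->
  dot u (iter t (mapply W) v) = dot (iter t (mapply W) u) v.
Proof.
move=> HS; elim: t u v => [|t IH] u v //.
rewrite !iterS dot_mapply_sym // IH -iterSr iterS //.
Qed.

Definition ev n (j : 'I_n) : 'I_n -> R := fun k => if j == k then 1 else 0.

Lemma mapply_ev n (P : mat n) i j : mapply P (ev j) i = P i j.
Proof.
rewrite /mapply /ev (bigD1 j) //= eqxx big1; first ring.
by move=> k /negbTE; rewrite eq_sym => ->; ring.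
Qed.

Lemma dot_ev n (j : 'I_n) u : dot (ev j) u = u j.
Proof. rewrite /dot /ev. have := sum_delta j 1 u. rewrite Rmult_1_l. by []. Qed.

Lemma mpow_sym n (W : mat n) t : (forall i j, W i j = W j i) ->
  forall i j, mpow W t i j = mpow W t j i.
Proof.
move=> HS i j.
rewrite -mapply_ev -(mapply_ev (mpow W t) j i) !mapply_mpow.
rewrite -(dot_ev i) -(dot_ev j) iter_sym // dotC //.
Qed.

Lemma norm2_W n (W : mat n) v : mixing_matrix W -> norm2 (mapply W v) <= norm2 v.
Proof.
move=> [HS [Hpos [Hrow [Hcol _]]]].
have Hj : forall i, mapply W v i * mapply W v i <= \big[Rplus/0]_(j < n) (W i j * (v j * v j)).
  move=> i; set m := mapply W v i.
  have H0 : 0 <= \big[Rplus/0]_(j < n) (W i j * ((v j - m) * (v j - m))).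
    apply: sum_ge0 => j; apply: Rmult_le_pos; [exact: Hpos | exact: Rle_0_sqr].
  have E : \big[Rplus/0]_(j < n) (W i j * ((v j - m) * (v j - m))) =
    \big[Rplus/0]_(j < n) (W i j * (v j * v j)) - 2 * m * mapply W v i + m * m * \big[Rplus/0]_(j < n) W i j.
    rewrite /mapply (eq_bigr (fun j => 1 * (W i j * (v j * v j)) + (- 2 * m) * (W i j * v j) + (m * m) * W i j)).
      rewrite sum_lin3; ring.
    move=> j _; ring.
  rewrite E Hrow -/m in H0. lra.
apply: (Rle_trans _ (\big[Rplus/0]_(i < n) \big[Rplus/0]_(j < n) (W i j * (v j * v j)))).
  exact: sum_le.
rewrite exchange_big /=; apply: Req_le; apply: eq_bigr => j _.
rewrite -big_distrl /= Hcol; ring.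
Qed.

Lemma norm2_iterW n (W : mat n) t v : mixing_matrix W -> norm2 (iter t (mapply W) v) <= norm2 v.
Proof.
move=> HW; elim: t => [|t IH] /=; first lra.
exact: Rle_trans (norm2_W _ HW) IH.
Qed.

Lemma quad_upper n (W : mat n) t u : mixing_matrix W ->
  dot u (mapply (mpow W t) u) <= norm2 u.
Proof.
move=> HW; rewrite mapply_mpow.
have H := norm2_iterW t u HW.
have H2 := norm2_lin u (iter t (mapply W) u) (-1).
have H3 := norm2_ge0 (fun c => u c + -1 * iter t (mapply W) u c).
nra.
Qed.

Lemma mapply_neg n (M : mat n) u i : mapply (fun i j => - M i j) u i = - mapply M u i.
Proof.
rewrite /mapply (eq_bigr (fun j => (-1) * (M i j * u j))); last by move=> j _; ring.
rewrite -big_distrr /=; ring.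
Qed.

Lemma dot_neg p (u w : vec p) : dot u (fun i => - w i) = - dot u w.
Proof.
rewrite /dot (eq_bigr (fun j => (-1) * (u j * w j))); last by move=> j _; ring.
rewrite -big_distrr /=; ring.
Qed.

Lemma consensus_W n (W : mat n) beta : (0 < n)%nat -> mixing_matrix W ->
  is_second_eig_mag W beta -> 0 < beta ->
  forall v, \big[Rplus/0]_(i < n) v i = 0 -> norm2 (mapply W v) <= beta ^ 2 * norm2 v.
Proof.
move=> Hn HW Hb Hbpos.
have HW' := HW.
move: HW' => [HS [Hpos [Hrow [Hcol [Hdiag [Hconn [Hsimple Heig]]]]]]].
have HnR : 0 < INR n by apply: lt_0_INR; apply/ltP.
pose K := fun i j : 'I_n => W i j - / INR n.
have HKS : forall i j, K i j = K j i by move=> i j; rewrite /K HS.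
have HKapp : forall u i, mapply K u i = mapply W u i - / INR n * \big[Rplus/0]_(j < n) u j.
  move=> u i; rewrite /mapply /K (eq_bigr (fun j => 1 * (W i j * u j) + (- / INR n) * u j)).
    rewrite sum_lin2; ring.
  move=> j _; ring.
have HKsum : forall u, \big[Rplus/0]_(i < n) mapply K u i = 0.
  move=> u; rewrite sum_mapply; apply: sum_eq0 => j.
  rewrite /K (eq_bigr (fun i => 1 * W i j + (- / INR n) * 1)); last by move=> i _; ring.
  rewrite sum_lin2 Hcol sum_const. field_simplify; [ring | lra].
have Keig : forall lam u, (exists i, u i <> 0) -> (forall i, mapply K u i = lam * u i) -> lam <> 0 ->
    Rabs lam <= beta.
  move=> lam u [i0 Hi0] Hu Hl.
  have Hs : \big[Rplus/0]_(i < n) u i = 0.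
    have := HKsum u. rewrite (eq_bigr (fun i => lam * u i)); last by move=> i _; rewrite Hu.
    rewrite -big_distrr /= => H0.
    case: (Rmult_integral _ _ H0) => //.
  have HWu : forall i, mapply W u i = lam * u i.
    move=> i; rewrite -Hu HKapp Hs; ring.
  apply: (proj2 Hb) => //; first by exists u; split => //; exists i0.
  move=> Hl1; subst lam.
  have [c Hc] := Hsimple u (fun i => ltac:(rewrite HWu; ring)).
  have Hc1 : \big[Rplus/0]_(i < n) u i = INR n * c by rewrite -sum_const; apply: eq_bigr => i _; exact: Hc.
  have Hc0 : INR n * c = 0 by rewrite -Hc1.
  apply: Hi0; rewrite Hc.
  case: (Rmult_integral _ _ Hc0) => //; lra.
pose NM := fun i j => - mmul K K i j.
have HNMS : forall i j, NM i j = NM j i.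
  move=> i j; rewrite /NM /mmul; f_equal; apply: eq_bigr => k _; rewrite HKS (HKS k j); ring.
have HNMq : forall u, dot u (mapply NM u) = - norm2 (mapply K u).
  move=> u.
  have -> : mapply NM u = (fun i => - mapply K (mapply K u) i).
    by apply: functional_extensionality => i; rewrite /NM mapply_neg mapply_mmul.
  rewrite dot_neg dot_mapply_sym //.
have [mu [[v0 [[i0 Hv0] Hev]] Hmu]] := spec_min Hn HNMS.
set sig := - mu.
have Hbound : forall u, norm2 (mapply K u) <= sig * norm2 u.
  move=> u; have := Hmu u; rewrite HNMq /sig; lra.
have HKK : forall i, mapply K (mapply K v0) i = sig * v0 i.
  move=> i; have := Hev i; rewrite /NM mapply_neg mapply_mmul /sig; lra.
have Hsig : sig <= beta ^ 2.
  apply: Rnot_lt_le => Hlt.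
  have Hsp : 0 < sig by nra.
  set s := sqrt sig.
  have Hs0 : 0 < s by apply: sqrt_lt_R0.
  have Hss : s * s = sig by rewrite /s sqrt_sqrt; lra.
  pose w := fun i => mapply K v0 i + s * v0 i.
  have Hfin : Rabs s <= beta.
    case: (classic (exists i, w i <> 0)) => Hw.
    - apply: (Keig s w Hw); last lra.
      move=> i; rewrite /w mapply_lin HKK; rewrite -Hss; ring.
    - have Hw0 : forall i, w i = 0.
        move=> i; apply: NNPP => Hi; apply: Hw; by exists i.
      rewrite -Rabs_Ropp; apply: (Keig (- s) v0); [by exists i0 | | lra].
      move=> i; have := Hw0 i; rewrite /w; lra.
  rewrite Rabs_pos_eq in Hfin; last lra.
  nra.
move=> v Hv.
have -> : mapply W v = mapply K v.
  apply: functional_extensionality => i; rewrite HKapp Hv; ring.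
have := Hbound v; have := norm2_ge0 v; nra.
Qed.

Lemma consensus_pow n (W : mat n) beta t : (0 < n)%nat -> mixing_matrix W ->
  is_second_eig_mag W beta -> 0 < beta ->
  forall v, \big[Rplus/0]_(i < n) v i = 0 ->
  norm2 (mapply (mpow W t) v) <= (beta ^ t) ^ 2 * norm2 v.
Proof.
move=> Hn HW Hb Hbpos v Hv.
have HW' := HW; move: HW' => [_ [_ [_ [Hcol _]]]].
have Hsum : forall u, \big[Rplus/0]_(i < n) mapply W u i = \big[Rplus/0]_(i < n) u i.
  move=> u; rewrite sum_mapply; apply: eq_bigr => j _; rewrite Hcol; ring.
rewrite mapply_mpow.
elim: t => [|t IH] /=; first lra.
have Hz : \big[Rplus/0]_(i < n) iter t (mapply W) v i = 0.
  elim: (t) => [|t' IH'] //=; by rewrite Hsum.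
have := consensus_W Hn HW Hb Hbpos Hz.
have := norm2_ge0 (iter t (mapply W) v).
have Hb2 : 0 <= beta ^ 2 by nra.
move=> H1 H2.
have : beta ^ 2 * norm2 (iter t (mapply W) v) <= beta ^ 2 * ((beta ^ t) ^ 2 * norm2 v).
  by apply: Rmult_le_compat_l.
have -> : (beta * beta ^ t) ^ 2 * norm2 v = beta ^ 2 * ((beta ^ t) ^ 2 * norm2 v) by ring.
lra.
Qed.

Lemma sum_lin2' n a b (F G : 'I_n -> R) :
  \big[Rplus/0]_(i < n) (a * F i + b * G i) = a * \big[Rplus/0]_(i < n) F i + b * \big[Rplus/0]_(i < n) G i.
Proof. exact: sum_lin2. Qed.

Definition xi n p (A : mat n) (f : 'I_n -> vec p -> R) a (y : 'I_n -> vec p) :=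
  \big[Rplus/0]_(i < n) f i (y i) +
  / (2 * a) * \big[Rplus/0]_(c < p) (norm2 (fun j => y j c) - dot (fun j => y j c) (mapply A (fun j => y j c))).

Lemma lyap_step n p (A : mat n) (f : 'I_n -> vec p -> R) g L lamn a (y z : 'I_n -> vec p) :
  (forall i j, A i j = A j i) ->
  (forall u, lamn * norm2 u <= dot u (mapply A u)) ->
  0 < a -> a * L <= 1 + lamn -> 0 <= L ->
  (forall i, is_gradient (f i) (g i)) -> (forall i, lipschitz L (g i)) ->
  (forall i c, z i c = mapply A (fun j => y j c) i - a * g i (y i) c) ->
  xi A f a z <= xi A f a y.
Proof.
move=> HS Hlam Ha HaL HL Hg HLip Hz.
pose du c := fun i => z i c - y i c.
pose gc c := fun i => g i (y i) c.
pose Nc c := norm2 (du c).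
pose Dc c := dot (du c) (gc c).
have Hq : forall c,
  norm2 (fun j => z j c) - dot (fun j => z j c) (mapply A (fun j => z j c)) <=
  (norm2 (fun j => y j c) - dot (fun j => y j c) (mapply A (fun j => y j c))) - (1 + lamn) * Nc c - 2 * a * Dc c.
  move=> c.
  set v := fun j => y j c.
  have Ew : (fun j => z j c) = (fun j => v j + 1 * du c j).
    by apply: functional_extensionality => j; rewrite /v /du; ring.
  have EAv : mapply A v = (fun i => (v i + 1 * du c i) + a * gc c i).
    apply: functional_extensionality => i; rewrite /du /gc /v Hz; ring.
  have EAw : mapply A (fun j => v j + 1 * du c j) = (fun i => mapply A v i + 1 * mapply A (du c) i).
    by apply: functional_extensionality => i; rewrite mapply_lin.
  rewrite Ew EAw !dot_linl !dot_linr.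
  have Hs : dot v (mapply A (du c)) = dot (du c) (mapply A v).
    by rewrite dot_mapply_sym // dotC.
  rewrite Hs.
  have HAv : dot (du c) (mapply A v) = dot (du c) v + Nc c + a * Dc c.
    by rewrite EAv !dot_linr /Nc /Dc /norm2; ring.
  rewrite HAv.
  have := Hlam (du c). rewrite /norm2 /Nc /norm2 => H1.
  rewrite ?dot_linl ?dot_linr ?(dotC v (du c)). nra.
have Hf : forall i, f i (z i) <= f i (y i) + dot (g i (y i)) (vsub (z i) (y i)) + L / 2 * norm2 (vsub (z i) (y i)).
  move=> i; exact: descent.
have ES1 : \big[Rplus/0]_(i < n) dot (g i (y i)) (vsub (z i) (y i)) = \big[Rplus/0]_(c < p) Dc c.
  rewrite /Dc /dot exchange_big /=; apply: eq_bigr => c _; apply: eq_bigr => i _.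
  rewrite /du /gc /vsub; ring.
have EU : \big[Rplus/0]_(i < n) norm2 (vsub (z i) (y i)) = \big[Rplus/0]_(c < p) Nc c.
  rewrite /Nc /norm2 /dot exchange_big /=; apply: eq_bigr => c _; apply: eq_bigr => i _.
  rewrite /du /vsub; ring.
have HU : 0 <= \big[Rplus/0]_(c < p) Nc c by apply: sum_ge0 => c; exact: norm2_ge0.
have HF : \big[Rplus/0]_(i < n) f i (z i) <= \big[Rplus/0]_(i < n) f i (y i) +
   \big[Rplus/0]_(c < p) Dc c + L / 2 * \big[Rplus/0]_(c < p) Nc c.
  rewrite -ES1 -EU big_distrr /= -!big_split /=; exact: sum_le.
have HQ : \big[Rplus/0]_(c < p) (norm2 (fun j => z j c) - dot (fun j => z j c) (mapply A (fun j => z j c))) <=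
  \big[Rplus/0]_(c < p) (norm2 (fun j => y j c) - dot (fun j => y j c) (mapply A (fun j => y j c)))
  - (1 + lamn) * \big[Rplus/0]_(c < p) Nc c - 2 * a * \big[Rplus/0]_(c < p) Dc c.
  apply: (Rle_trans _ _ _ (sum_le Hq)).
  rewrite (eq_bigr (fun c => 1 * (norm2 (fun j => y j c) - dot (fun j => y j c) (mapply A (fun j => y j c)))
      + (- (1 + lamn)) * Nc c + (- 2 * a) * Dc c)); last by move=> c _; ring.
  rewrite sum_lin3; lra.
rewrite /xi.
set SQz := \big[Rplus/0]_(c < p) _ in HQ *.
set SQy := \big[Rplus/0]_(c < p) (norm2 (fun j => y j c) - _) in HQ *.
set U := \big[Rplus/0]_(c < p) Nc c in HU HF HQ.
set S1 := \big[Rplus/0]_(c < p) Dc c in HF HQ.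
have Hk : / (2 * a) * (2 * a) = 1 by field; lra.
have Hkp : 0 < / (2 * a) by apply: Rinv_0_lt_compat; lra.
have H1 : / (2 * a) * SQz <= / (2 * a) * (SQy - (1 + lamn) * U - 2 * a * S1) by apply: Rmult_le_compat_l; lra.
have H2 : / (2 * a) * (2 * a * S1) = S1 by rewrite -Rmult_assoc Hk; ring.
have H3 : L / 2 * U <= / (2 * a) * ((1 + lamn) * U).
  have -> : / (2 * a) * ((1 + lamn) * U) = (1 + lamn) * U / (2 * a) by field; lra.
  apply: (Rmult_le_reg_r (2 * a)); first lra.
  have -> : (1 + lamn) * U / (2 * a) * (2 * a) = (1 + lamn) * U by field; lra.
  nra.
have E4 : / (2 * a) * (SQy - (1 + lamn) * U - 2 * a * S1) = / (2 * a) * SQy - / (2 * a) * ((1 + lamn) * U) - / (2 * a) * (2 * a * S1) by ring.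
lra.
Qed.

Lemma lyap_bound n p (A : mat n) (f : 'I_n -> vec p -> R) g L lamn a (xs : nat -> 'I_n -> vec p) :
  (forall i j, A i j = A j i) ->
  (forall u, lamn * norm2 u <= dot u (mapply A u)) ->
  (forall u, dot u (mapply A u) <= norm2 u) ->
  0 < a -> a * L <= 1 + lamn -> 0 <= L ->
  (forall i, is_gradient (f i) (g i)) -> (forall i, lipschitz L (g i)) ->
  (forall i, xs O i = vzero) ->
  (forall k i c, xs (S k) i c = mapply A (fun j => xs k j c) i - a * g i (xs k i) c) ->
  forall k, \big[Rplus/0]_(i < n) f i (xs k i) <= \big[Rplus/0]_(i < n) f i vzero.
Proof.
move=> HS Hlam Hup Ha HaL HL Hg HLip H0 Hrec.
have Hxi : forall k, xi A f a (xs k) <= xi A f a (xs O).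
  elim => [|k IH]; first lra.
  apply: Rle_trans IH; apply: (lyap_step (g := g) (L := L) (lamn := lamn)) => // i c; exact: Hrec.
have Hxi0 : xi A f a (xs O) = \big[Rplus/0]_(i < n) f i vzero.
  rewrite /xi. have E : forall c, (fun j => xs O j c) = vzero.
    by move=> c; apply: functional_extensionality => j; rewrite H0.
  have E2 : \big[Rplus/0]_(c < p) (norm2 (fun j => xs O j c) - dot (fun j => xs O j c) (mapply A (fun j => xs O j c))) = 0.
    by apply: sum_eq0 => c; rewrite E /norm2 !vzero_dotl; ring.
  have E3 : \big[Rplus/0]_(i < n) f i (xs O i) = \big[Rplus/0]_(i < n) f i vzero.
    by apply: eq_bigr => i _; rewrite H0.
  rewrite E2 E3; ring.
move=> k; rewrite -Hxi0.
apply: Rle_trans (Hxi k).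
rewrite /xi.
have : 0 <= \big[Rplus/0]_(c < p) (norm2 (fun j => xs k j c) - dot (fun j => xs k j c) (mapply A (fun j => xs k j c))).
  apply: sum_ge0 => c; have := Hup (fun j => xs k j c); lra.
have : 0 < / (2 * a) by apply: Rinv_0_lt_compat; lra.
move=> H1 H2. have := Rmult_le_pos _ _ (Rlt_le _ _ H1) H2. lra.
Qed.

Lemma grad_bound p (f : vec p -> R) g L fs y : is_gradient f g -> lipschitz L g -> 0 < L ->
  is_min_value f fs -> norm2 (g y) <= 2 * L * (f y - fs).
Proof.
move=> Hg HLip HL [_ Hmin].
set k := / L.
have H := descent y (vsub y (vscale k (g y))) Hg HLip (Rlt_le _ _ HL).
have H2 := Hmin (vsub y (vscale k (g y))).
move: H; dexp => H.
have Hk : k * L = 1 by rewrite /k; field; lra.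
have Hk0 : 0 < k by apply: Rinv_0_lt_compat.
rewrite ?(dotC y (g y)) in H.
set N := dot (g y) (g y) in H *.
set fy' := f (vsub y _) in H H2.
have E : L / 2 * (k * (k * N)) = k * N / 2.
  have -> : L / 2 * (k * (k * N)) = (k * L) * k * N / 2 by field.
  by rewrite Hk; field.
have HLk : 2 * L * (k * N / 2) = N by rewrite -(Rmult_1_l N) -{2}Hk; field.
nra.
Qed.

Lemma stack_mink n p (a b : 'I_p -> 'I_n -> R) s :
  \big[Rplus/0]_(c < p) norm2 (fun i => a c i + s * b c i) <=
  (sqrt (\big[Rplus/0]_(c < p) norm2 (a c)) + Rabs s * sqrt (\big[Rplus/0]_(c < p) norm2 (b c))) ^ 2.
Proof.
set X := \big[Rplus/0]_(c < p) norm2 (a c).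
set Y := \big[Rplus/0]_(c < p) norm2 (b c).
set Z := \big[Rplus/0]_(c < p) dot (a c) (b c).
have Hexp : forall r, \big[Rplus/0]_(c < p) norm2 (fun i => a c i + r * b c i) = X + 2 * Z * r + Y * r ^ 2.
  move=> r; rewrite (eq_bigr (fun c => 1 * norm2 (a c) + (2 * r) * dot (a c) (b c) + (r ^ 2) * norm2 (b c))).
    rewrite sum_lin3 /X /Y /Z; ring.
  by move=> c _; rewrite norm2_lin; ring.
have HX : 0 <= X by apply: sum_ge0 => c; exact: norm2_ge0.
have HY : 0 <= Y by apply: sum_ge0 => c; exact: norm2_ge0.
have HZ : Z ^ 2 <= X * Y.
  apply: quad_disc => // r; rewrite -Hexp; apply: sum_ge0 => c; exact: norm2_ge0.
have HsX := sqrt_sqrt X HX. have HsY := sqrt_sqrt Y HY.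
have Hsx0 := sqrt_pos X. have Hsy0 := sqrt_pos Y.
have HaZ : Rabs Z <= sqrt X * sqrt Y.
  rewrite -sqrt_mult // -sqrt_Rsqr_abs; apply: sqrt_le_1_alt; rewrite /Rsqr; nra.
rewrite Hexp.
have Hs := Rabs_pos s.
have Hs2 : Rabs s ^ 2 = s ^ 2 by rewrite pow2_abs.
have H1 : 2 * Z * s <= 2 * Rabs s * (sqrt X * sqrt Y).
  have := Rle_abs (Z * s); rewrite Rabs_mult. nra.
nra.
Qed.

Definition mean n (v : 'I_n -> R) := \big[Rplus/0]_(i < n) v i / INR n.

Lemma var_le n (w : 'I_n -> R) : (0 < n)%nat -> norm2 (fun i => w i + (-1) * mean w) <= norm2 w.
Proof.
move=> Hn.
have HnR : 0 < INR n by apply: lt_0_INR; apply/ltP.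
have := norm2_lin w (fun _ => mean w) (-1).
have E1 : dot w (fun _ => mean w) = mean w * (INR n * mean w).
  rewrite /dot (eq_bigr (fun i => mean w * w i)); last by move=> i _; ring.
  rewrite -big_distrr /=; congr (_ * _); rewrite /mean /Rdiv Rmult_comm Rmult_assoc Rinv_l; [by rewrite Rmult_1_r | lra].
have E2 : norm2 (fun _ : 'I_n => mean w) = INR n * (mean w * mean w) by rewrite /norm2 /dot sum_const.
rewrite E1 E2 => ->. nra.
Qed.

Lemma mean_mul n (v : 'I_n -> R) : (0 < n)%nat -> INR n * mean v = \big[Rplus/0]_(i < n) v i.
Proof.
move=> Hn; have HnR : 0 < INR n by apply: lt_0_INR; apply/ltP.
rewrite /mean /Rdiv Rmult_comm Rmult_assoc Rinv_l; [by rewrite Rmult_1_r | lra].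
Qed.

Lemma sum_dev n (v : 'I_n -> R) : (0 < n)%nat -> \big[Rplus/0]_(i < n) (v i + (-1) * mean v) = 0.
Proof.
move=> Hn; have HnR : 0 < INR n by apply: lt_0_INR; apply/ltP.
rewrite big_split /= sum_const -(mean_mul v Hn); ring.
Qed.

Lemma cons_bound n p (A : mat n) (g : 'I_n -> vec p -> vec p) a bt Dd (xs : nat -> 'I_n -> vec p) :
  (0 < n)%nat ->
  (forall u, \big[Rplus/0]_(i < n) mapply A u i = \big[Rplus/0]_(i < n) u i) ->
  (forall m i, mapply A (fun _ => m) i = m) ->
  (forall v, \big[Rplus/0]_(i < n) v i = 0 -> norm2 (mapply A v) <= bt ^ 2 * norm2 v) ->
  0 <= bt < 1 -> 0 < a -> 0 <= Dd ->
  (forall k, \big[Rplus/0]_(i < n) norm2 (g i (xs k i)) <= Dd ^ 2) ->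
  (forall i, xs O i = vzero) ->
  (forall k i c, xs (S k) i c = mapply A (fun j => xs k j c) i - a * g i (xs k i) c) ->
  forall k, \big[Rplus/0]_(c < p) norm2 (fun i => xs k i c + (-1) * mean (fun j => xs k j c))
            <= (a * Dd / (1 - bt)) ^ 2.
Proof.
move=> Hn Hsum Hconst Hcons Hbt Ha HD Hgrad H0 Hrec.
have HnR : 0 < INR n by apply: lt_0_INR; apply/ltP.
set Bd := a * Dd / (1 - bt).
have HB : 0 <= Bd by rewrite /Bd; apply: Rmult_le_pos; [nra | apply: Rlt_le; apply: Rinv_0_lt_compat; lra].
pose e k := \big[Rplus/0]_(c < p) norm2 (fun i => xs k i c + (-1) * mean (fun j => xs k j c)).
have He0 : forall k, 0 <= e k by move=> k; apply: sum_ge0 => c; exact: norm2_ge0.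
suff Hs : forall k, sqrt (e k) <= Bd.
  move=> k; have := Hs k; have := sqrt_sqrt _ (He0 k); have := sqrt_pos (e k).
  rewrite -/(e k). nra.
elim => [|k IH].
  have -> : e O = 0.
    apply: sum_eq0 => c.
    have E : (fun i => xs O i c + (-1) * mean (fun j => xs O j c)) = vzero.
      apply: functional_extensionality => i; rewrite /mean H0 /vzero.
      rewrite (eq_bigr (fun _ => 0)); last by move=> j _; rewrite H0.
      rewrite sum_const; field; lra.
    by rewrite E /norm2 vzero_dotl.
  by rewrite sqrt_0.
pose dev c := fun i => xs k i c + (-1) * mean (fun j => xs k j c).
pose gc c := fun i => g i (xs k i) c.
pose ac c := mapply A (dev c).
pose bc c := fun i => gc c i + (-1) * mean (gc c).
have Edev : forall c, (fun i => xs k.+1 i c + (-1) * mean (fun j => xs k.+1 j c)) =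
                      (fun i => ac c i + (- a) * bc c i).
  move=> c; apply: functional_extensionality => i.
  have Em : mean (fun j => xs k.+1 j c) = mean (fun j => xs k j c) - a * mean (gc c).
    rewrite /mean (eq_bigr (fun j => 1 * mapply A (fun j0 => xs k j0 c) j + (- a) * gc c j)).
      rewrite sum_lin2 Hsum; field; lra.
    by move=> j _; rewrite Hrec /gc; ring.
  rewrite Em /ac /bc /dev Hrec.
  rewrite (mapply_lin A (fun j => xs k j c) (fun _ => mean (fun j => xs k j c)) (-1) i) Hconst /gc; ring.
have He1 : e k.+1 = \big[Rplus/0]_(c < p) norm2 (fun i => ac c i + (- a) * bc c i).
  by apply: eq_bigr => c _; rewrite Edev.
have HM := stack_mink ac bc (- a).
rewrite -He1 Rabs_Ropp Rabs_pos_eq in HM; last lra.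
set X := \big[Rplus/0]_(c < p) norm2 (ac c) in HM.
set Y := \big[Rplus/0]_(c < p) norm2 (bc c) in HM.
have HX : X <= bt ^ 2 * e k.
  rewrite /X /e big_distrr /=; apply: sum_le => c; apply: Hcons.
  exact: sum_dev.
have HY : Y <= Dd ^ 2.
  apply: Rle_trans (Hgrad k).
  apply: (Rle_trans _ (\big[Rplus/0]_(c < p) norm2 (gc c))).
    by apply: sum_le => c; apply: var_le.
  rewrite /norm2 /dot exchange_big /=; apply: Req_le; apply: eq_bigr => i _; apply: eq_bigr => c _.
  by rewrite /gc.
have HsX : sqrt X <= bt * sqrt (e k).
  have HX0 : 0 <= X by apply: sum_ge0 => c; exact: norm2_ge0.
  have Hs1 := sqrt_sqrt _ (He0 k). have Hs2 := sqrt_pos (e k).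
  have H3 : X <= (bt * sqrt (e k)) ^ 2 by nra.
  apply: Rle_trans (sqrt_le_1_alt _ _ H3) _; rewrite sqrt_pow2; nra.
have HsY : sqrt Y <= Dd.
  apply: Rle_trans (sqrt_le_1_alt _ _ HY) _; rewrite sqrt_pow2; nra.
have Hsx0 := sqrt_pos X. have Hsy0 := sqrt_pos Y.
have Hek := sqrt_pos (e k).
have H1 : sqrt (e k.+1) <= sqrt X + a * sqrt Y.
  apply: Rle_trans (sqrt_le_1_alt _ _ HM) _.
  rewrite sqrt_pow2; [lra | nra].
have HBe : bt * Bd + a * Dd = Bd by rewrite /Bd; field; lra.
have : bt * sqrt (e k) <= bt * Bd by apply: Rmult_le_compat_l; lra.
have : a * sqrt Y <= a * Dd by apply: Rmult_le_compat_l; lra.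
lra.
Qed.

Lemma le_maxR n (F : 'I_n -> R) i : F i <= maxR F.
Proof.
rewrite /maxR.
have : i \in index_enum 'I_n by rewrite mem_index_enum.
elim: (index_enum 'I_n) => [|a r IH] //= Hi.
rewrite big_cons; rewrite in_cons in Hi.
case/orP: Hi => [/eqP <-|Hi]; first exact: Rmax_l.
apply: Rle_trans (IH Hi) _; exact: Rmax_r.
Qed.



Lemma maxR_le n (F : 'I_n -> R) B : 0 <= B -> (forall i, F i <= B) -> maxR F <= B.
Proof.
move=> HB H; rewrite /maxR; apply: (big_ind (fun m => m <= B)) => //.
move=> a b Ha Hb; exact: Rmax_lub.
Qed.

Lemma deriv_ext f g s l : (forall z, f z = g z) -> derivable_pt_lim f s l -> derivable_pt_lim g s l.
Proof.
move=> E H eps He; have [d Hd] := H eps He; exists d => h Hh Hh2; rewrite -!E; exact: Hd.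
Qed.

Lemma deriv_sum_seq (I : Type) (r : seq I) (F : I -> R -> R) (d : I -> R) s :
  (forall i, derivable_pt_lim (F i) s (d i)) ->
  derivable_pt_lim (fun z => \big[Rplus/0]_(i <- r) F i z) s (\big[Rplus/0]_(i <- r) d i).
Proof.
move=> H; elim: r => [|a r IH].
  rewrite big_nil; apply: (deriv_ext (f := fct_cte 0)); last exact: derivable_pt_lim_const.
  by move=> z; rewrite big_nil.
rewrite big_cons; apply: (deriv_ext (f := (F a + (fun z => \big[Rplus/0]_(i <- r) F i z))%F)).
  by move=> z; rewrite big_cons.
exact: derivable_pt_lim_plus.
Qed.

Lemma dot_Gam n p (g : 'I_n -> vec p -> vec p) k x d :
  dot (fun c => k * \big[Rplus/0]_(i < n) g i x c) d = k * \big[Rplus/0]_(i < n) dot (g i x) d.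
Proof.
rewrite /dot big_distrr /=.
transitivity (\big[Rplus/0]_(c < p) \big[Rplus/0]_(i < n) (k * (g i x c * d c))).
  apply: eq_bigr => c _; rewrite big_distrr big_distrl /=; apply: eq_bigr => i _ /=; ring.
rewrite exchange_big /=; apply: eq_bigr => i _; rewrite big_distrr //.
Qed.

Lemma avg_props n p (f : 'I_n -> vec p -> R) g Lf muh :
  (0 < n)%nat -> (forall i, is_gradient (f i) (g i)) -> (forall i, 0 <= Lf i) ->
  (forall i, lipschitz (Lf i) (g i)) -> strongly_convex muh (fun x => sumR (fun i => f i x)) ->
  (forall x y, / INR n * sumR (fun i => f i x) + dot (fun c => / INR n * \big[Rplus/0]_(i < n) g i x c) (vsub y x)
      + (muh / INR n) / 2 * norm2 (vsub y x) <= / INR n * sumR (fun i => f i y)) /\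
  (forall x y, / INR n * sumR (fun i => f i y) <= / INR n * sumR (fun i => f i x)
      + dot (fun c => / INR n * \big[Rplus/0]_(i < n) g i x c) (vsub y x)
      + (sumR Lf / INR n) / 2 * norm2 (vsub y x)).
Proof.
move=> Hn Hg HL0 HLip Hsc.
have HnR : 0 < INR n by apply: lt_0_INR; apply/ltP.
have Hk : 0 < / INR n by apply: Rinv_0_lt_compat.
split => x y; rewrite dot_Gam.
- have Hd : derivable_pt_lim (fun s => sumR (fun i => f i (vadd x (vscale s (vsub y x))))) 0
      (\big[Rplus/0]_(i < n) dot (g i x) (vsub y x)).
    have := @deriv_sum_seq _ (index_enum 'I_n) (fun i s => f i (vadd x (vscale s (vsub y x))))
       (fun i => dot (g i x) (vsub y x)) 0.
    move=> H; apply: H => i.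
    have := line_deriv x (vsub y x) 0 (Hg i); rewrite line0 //.
  have H := first_order (D := fun _ _ => \big[Rplus/0]_(i < n) dot (g i x) (vsub y x)) Hd Hsc.
  have := Rmult_le_compat_l _ _ _ (Rlt_le _ _ Hk) H.
  have HN := norm2_ge0 (vsub y x).
  move=> H2; apply: Rle_trans H2; apply: Req_le; rewrite /Rdiv; ring.
- have H : sumR (fun i => f i y) <= sumR (fun i => f i x) + \big[Rplus/0]_(i < n) dot (g i x) (vsub y x)
      + sumR Lf / 2 * norm2 (vsub y x).
    rewrite /sumR /Rdiv !big_distrl /= -!big_split /=; apply: sum_le => i.
    have := descent x y (Hg i) (HLip i) (HL0 i). lra.
  have := Rmult_le_compat_l _ _ _ (Rlt_le _ _ Hk) H.
  move=> H2; apply: Rle_trans H2 _; apply: Req_le; rewrite /Rdiv; ring.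
Qed.

Lemma grad_zero p (phi : vec p -> R) (Gam : vec p -> vec p) Lq xs : 0 < Lq ->
  (forall x y, phi y <= phi x + dot (Gam x) (vsub y x) + Lq / 2 * norm2 (vsub y x)) ->
  (forall y, phi xs <= phi y) -> Gam xs = vzero.
Proof.
move=> HL Hde Hmin.
set k := / Lq.
have Hk : k * Lq = 1 by rewrite /k; field; lra.
have Hk0 : 0 < k by apply: Rinv_0_lt_compat.
have H1 := Hde xs (vsub xs (vscale k (Gam xs))).
have H2 := Hmin (vsub xs (vscale k (Gam xs))).
move: H1; dexp => H1.
rewrite ?(dotC xs (Gam xs)) in H1.
have HN := norm2_ge0 (Gam xs). rewrite /norm2 in HN.
set N := dot (Gam xs) (Gam xs) in H1 HN.
set fy := phi (vsub xs _) in H1 H2.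
have E : Lq / 2 * (k * (k * N)) = k * N / 2.
  have -> : Lq / 2 * (k * (k * N)) = (k * Lq) * k * N / 2 by field.
  by rewrite Hk; field.
have : k * N <= 0 by nra.
move=> H3; apply: norm2_eq0; rewrite /norm2 -/N; nra.
Qed.

Lemma young p (P e : vec p) t : 0 < t ->
  norm2 (fun c => P c + 1 * e c) <= (1 + t) * norm2 P + (1 + / t) * norm2 e.
Proof.
move=> Ht.
rewrite norm2_lin.
have H := norm2_ge0 (fun c => vscale t P c + (-1) * e c).
rewrite norm2_lin norm2_scale dotC dot_scaler dotC in H.
have HP := norm2_ge0 P. have He := norm2_ge0 e.
have Hti : 0 < / t by apply: Rinv_0_lt_compat.
have : 2 * dot P e <= t * norm2 P + / t * norm2 e.
  apply: (Rmult_le_reg_r t) => //.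
  have -> : (t * norm2 P + / t * norm2 e) * t = t ^ 2 * norm2 P + norm2 e by field; lra.
  nra.
nra.
Qed.

Lemma sq_sum_le n (w : 'I_n -> R) : (\big[Rplus/0]_(i < n) w i) ^ 2 <= INR n * \big[Rplus/0]_(i < n) (w i * w i).
Proof.
have := CS2 (fun _ : 'I_n => 1) w.
have E1 : dot (fun _ : 'I_n => 1) w = \big[Rplus/0]_(i < n) w i by apply: eq_bigr => i _; ring.
have E2 : norm2 (fun _ : 'I_n => 1) = INR n by rewrite /norm2 /dot sum_const; ring.
by rewrite E1 E2.
Qed.

Lemma seq_bound (N : nat -> R) r Bq : 0 <= r < 1 -> 0 <= Bq ->
  (forall k, N (S k) <= r * N k + Bq) -> forall k, N k <= r ^ k * N O + Bq / (1 - r).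
Proof.
move=> Hr HB H; elim => [|k IH] /=.
  have : 0 <= Bq / (1 - r) by apply: Rmult_le_pos; [lra | apply: Rlt_le; apply: Rinv_0_lt_compat; lra].
  lra.
apply: Rle_trans (H k) _.
have : r * N k <= r * (r ^ k * N O + Bq / (1 - r)) by apply: Rmult_le_compat_l; lra.
have E : r * (Bq / (1 - r)) + Bq = Bq / (1 - r) by field; lra.
nra.
Qed.

Lemma sqrt_add_le a b : 0 <= a -> 0 <= b -> sqrt (a + b) <= sqrt a + sqrt b.
Proof.
move=> Ha Hb.
have Hsa := sqrt_pos a. have Hsb := sqrt_pos b.
have H : a + b <= (sqrt a + sqrt b) ^ 2.
  have := sqrt_sqrt a Ha; have := sqrt_sqrt b Hb; nra.
apply: Rle_trans (sqrt_le_1_alt _ _ H) _; rewrite sqrt_pow2; lra.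
Qed.

Unset Implicit Arguments.

Theorem theorem1
  (n p t : nat) (Hn : (0 < n)%nat) (Ht : (1 <= t)%nat)
  (W : mat n) (HW : mixing_matrix W)
  (beta : R) (Hbeta : is_second_eig_mag W beta) (Hbeta01 : 0 < beta < 1)
  (lamn : R) (Hlamn : is_min_eigenvalue (mpow W t) lamn)
  (f : 'I_n -> vec p -> R) (g : 'I_n -> vec p -> vec p)
  (Lf : 'I_n -> R) (fstar : 'I_n -> R)
  (Hgrad : forall i, is_gradient (f i) (g i))
  (Hconv : forall i, convex_fun (f i))
  (HL0 : forall i, 0 <= Lf i)
  (HLip : forall i, lipschitz (Lf i) (g i))
  (Hmin : forall i, is_min_value (f i) (fstar i))
  (muh : R) (Hmuh : 0 < muh)
  (Hsc : strongly_convex muh (fun x => sumR (fun i => f i x)))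
  (xstar : vec p) (Hxstar : is_minimizer (fun x => sumR (fun i => f i x)) xstar)
  (alpha : R) :
  let L := maxR Lf in
  let mu_f := muh / INR n in
  let L_f := sumR Lf / INR n in
  let c2 := 2 * mu_f * L_f / (mu_f + L_f) in
  let c4 := 2 / (mu_f + L_f) in
  let D := sqrt (2 * L * sumR (fun i => f i vzero - fstar i)) in
  let x := dgd W t alpha g in
  let c1sq := fun delta => 1 - alpha * c2 + alpha * delta - alpha ^ 2 * delta * c2 in
  let c3sq := fun delta => alpha ^ 3 * (alpha + / delta) * L ^ 2 * D ^ 2 in
  0 < alpha -> alpha <= Rmin ((1 + lamn) / L) c4 ->
  (forall delta, 0 < delta -> forall k : nat,
     norm2 (vsub (xbar (x (S k))) xstar)
       <= c1sq delta * norm2 (vsub (xbar (x k)) xstar)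
          + c3sq delta / (1 - beta ^ t) ^ 2) /\
  (alpha * c2 < 1 ->
     let delta := c2 / (2 * (1 - alpha * c2)) in
     let c1 := sqrt (1 - alpha * c2 / 2) in
     let c3 := sqrt (c3sq delta) in
     c1sq delta = 1 - alpha * c2 / 2 /\ 0 < c1 < 1 /\
     forall k : nat,
       norm (vsub (xbar (x k)) xstar)
         <= c1 ^ k * norm (vsub (xbar (x O)) xstar)
            + c3 / (sqrt (1 - c1 ^ 2) * (1 - beta ^ t))).
Proof.
move=> L mu_f L_f c2 c4 D x c1sq c3sq Ha Hale.
have HnR : 0 < INR n by apply: lt_0_INR; apply/ltP.
have HnR1 : 1 <= INR n by apply: (le_INR 1); apply/leP.
have HLmax : forall i, Lf i <= L by move=> i; apply: le_maxR.
have i0 : 'I_n := Ordinal Hn.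
have HL0' : 0 <= L by apply: Rle_trans (HL0 i0) (HLmax i0).
have Hale1 : alpha <= (1 + lamn) / L by apply: Rle_trans Hale _; apply: Rmin_l.
have Hac4 : alpha <= c4 by apply: Rle_trans Hale _; apply: Rmin_r.
have HLpos : 0 < L.
  case: (Rle_lt_or_eq_dec 0 L HL0') => // HL.
  rewrite -HL /Rdiv Rinv_0 Rmult_0_r in Hale1. lra.
have HaL : alpha * L <= 1 + lamn.
  have := Rmult_le_compat_r L _ _ (Rlt_le _ _ HLpos) Hale1.
  have -> : (1 + lamn) / L * L = 1 + lamn by field; lra.
  done.
have HLipL : forall i, lipschitz L (g i).
  move=> i x1 y1; apply: Rle_trans (HLip i x1 y1) _.
  apply: Rmult_le_compat_r; [exact: norm_ge0 | exact: HLmax].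
have HsumL : L <= sumR Lf.
  apply: maxR_le; first by apply: sum_ge0.
  move=> i; apply: sum_term_le => j; exact: HL0.
have HLf : 0 < L_f by rewrite /L_f; apply: Rdiv_lt_0_compat; lra.
have Hmuf : 0 < mu_f by rewrite /mu_f; apply: Rdiv_lt_0_compat; lra.
have Hc2 : 0 < c2 by rewrite /c2; apply: Rdiv_lt_0_compat; nra.
have HW' := HW; move: HW' => [HWS [HWpos [HWrow [HWcol _]]]].
set A := mpow W t.
have HAS : forall i j, A i j = A j i by apply: mpow_sym.
have HAlam : forall u, lamn * norm2 u <= dot u (mapply A u).
  have [mu [Hmu Hb]] := spec_min Hn HAS.
  have := proj2 Hlamn mu Hmu => Hle u.
  apply: Rle_trans (Hb u); apply: Rmult_le_compat_r => //; exact: norm2_ge0.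
have HAup : forall u, dot u (mapply A u) <= norm2 u by move=> u; apply: quad_upper.
have HWsum : forall u, \big[Rplus/0]_(i < n) mapply W u i = \big[Rplus/0]_(i < n) u i.
  by move=> u; rewrite sum_mapply; apply: eq_bigr => j _; rewrite HWcol; ring.
have HAsum : forall u, \big[Rplus/0]_(i < n) mapply A u i = \big[Rplus/0]_(i < n) u i.
  move=> u; rewrite /A mapply_mpow; elim: (t) => [|t' IH] //=; by rewrite HWsum.
have HWconst : forall m, mapply W (fun _ => m) = (fun _ => m).
  move=> m; apply: functional_extensionality => i.
  rewrite /mapply (eq_bigr (fun j => m * W i j)); last by move=> j _; ring.
  rewrite -big_distrr /= HWrow; ring.
have HAconst : forall m i, mapply A (fun _ => m) i = m.
  move=> m i; rewrite /A mapply_mpow.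
  suff -> : iter t (mapply W) (fun _ => m) = (fun _ => m) by [].
  elim: (t) => [|t' IH] //=; by rewrite IH HWconst.
have HAcons : forall v, \big[Rplus/0]_(i < n) v i = 0 -> norm2 (mapply A v) <= (beta ^ t) ^ 2 * norm2 v.
  move=> v Hv; apply: consensus_pow => //; lra.
have Hbt : 0 <= beta ^ t < 1.
  apply: pow_lt_1_compat; first lra. by apply/ltP.
have Hrec : forall k i c, x (S k) i c = mapply A (fun j => x k j c) i - alpha * g i (x k i) c.
  by [].
have H0 : forall i, x O i = vzero by [].
have Hfk := lyap_bound HAS HAlam HAup Ha HaL HL0' Hgrad HLipL H0 Hrec.
have Hfs : forall i, 0 <= f i vzero - fstar i by move=> i; have := proj2 (Hmin i) vzero; lra.
have HX0 : 0 <= 2 * L * sumR (fun i => f i vzero - fstar i).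
  apply: Rmult_le_pos; first lra. by apply: sum_ge0.
have HD2 : D ^ 2 = 2 * L * sumR (fun i => f i vzero - fstar i) by rewrite /D pow2_sqrt.
have HD : 0 <= D by apply: sqrt_pos.
have Hgr : forall k, \big[Rplus/0]_(i < n) norm2 (g i (x k i)) <= D ^ 2.
  move=> k.
  apply: (Rle_trans _ (\big[Rplus/0]_(i < n) ((2 * L) * f i (x k i) + (- (2 * L)) * fstar i))).
    apply: sum_le => i; have := grad_bound (x k i) (Hgrad i) (HLipL i) HLpos (Hmin i); lra.
  have E : sumR (fun i => f i vzero - fstar i) = 1 * \big[Rplus/0]_(i < n) f i vzero + (-1) * \big[Rplus/0]_(i < n) fstar i.
    rewrite -sum_lin2; apply: eq_bigr => i _; ring.
  rewrite sum_lin2 HD2 E.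
  have := Hfk k. nra.
have Hcons := cons_bound Hn HAsum HAconst HAcons Hbt Ha HD Hgr H0 Hrec.
have [Hsfo Hde] := avg_props Hn Hgrad HL0 HLip Hsc.
have Hxmin : forall y, / INR n * sumR (fun i => f i xstar) <= / INR n * sumR (fun i => f i y).
  move=> y; apply: Rmult_le_compat_l; [apply: Rlt_le; apply: Rinv_0_lt_compat; lra | exact: Hxstar].
have G0 := grad_zero (phi := fun z => / INR n * sumR (fun i => f i z))
   (Gam := fun z c => / INR n * \big[Rplus/0]_(i < n) g i z c) HLf Hde Hxmin.
have Part1 : forall delta, 0 < delta -> forall k : nat,
     norm2 (vsub (xbar (x (S k))) xstar)
       <= c1sq delta * norm2 (vsub (xbar (x k)) xstar)
          + c3sq delta / (1 - beta ^ t) ^ 2.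
  move=> delta Hdelta k.
  set xb := xbar (x k).
  set Gx := (fun c => / INR n * \big[Rplus/0]_(i < n) g i xb c).
  set P := vsub (vsub xb (vscale alpha Gx)) xstar.
  pose e := fun c => alpha / INR n * \big[Rplus/0]_(i < n) (g i xb c - g i (x k i) c).
  have Esplit : vsub (xbar (x (S k))) xstar = (fun c => P c + 1 * e c).
    apply: functional_extensionality => c.
    have S1 : \big[Rplus/0]_(i < n) x (S k) i c =
              1 * \big[Rplus/0]_(i < n) x k i c + (- alpha) * \big[Rplus/0]_(i < n) g i (x k i) c.
      rewrite -(HAsum (fun j => x k j c)) -sum_lin2; apply: eq_bigr => i _; rewrite Hrec; ring.
    have S2 : \big[Rplus/0]_(i < n) (g i xb c - g i (x k i) c) =
              1 * \big[Rplus/0]_(i < n) g i xb c + (-1) * \big[Rplus/0]_(i < n) g i (x k i) c.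
      rewrite -sum_lin2; apply: eq_bigr => i _; ring.
    have Exb : xb c = \big[Rplus/0]_(i < n) x k i c / INR n by [].
    rewrite /vsub /xbar S1 /P /e S2 /vsub /vscale /Gx Exb.
    field; lra.
  rewrite Esplit.
  have Hy := young P e (t := alpha * delta) ltac:(nra).
  have HP := contraction xb Hmuf HLf Hsfo Hde G0 Ha Hac4.
  rewrite -/Gx -/P in HP.
  set NX := norm2 (vsub xb xstar) in HP *.
  set Bd := alpha * D / (1 - beta ^ t).
  have HNe : norm2 e <= alpha ^ 2 * L ^ 2 * Bd ^ 2.
    have H1 : norm2 e <= alpha ^ 2 / INR n * \big[Rplus/0]_(i < n) norm2 (vsub (g i xb) (g i (x k i))).
      rewrite /norm2 /dot exchange_big /=.
      rewrite big_distrr /=; apply: sum_le => c.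
      have := sq_sum_le (fun i => g i xb c - g i (x k i) c).
      rewrite /e /vsub.
      set Sw := \big[Rplus/0]_(i < n) (g i xb c - g i (x k i) c).
      set Sq := \big[Rplus/0]_(i < n) _.
      move=> H.
      have -> : alpha / INR n * Sw * (alpha / INR n * Sw) = (alpha / INR n) ^ 2 * Sw ^ 2 by ring.
      have : (alpha / INR n) ^ 2 * Sw ^ 2 <= (alpha / INR n) ^ 2 * (INR n * Sq).
        apply: Rmult_le_compat_l => //; nra.
      have -> : (alpha / INR n) ^ 2 * (INR n * Sq) = alpha ^ 2 / INR n * Sq by field; lra.
      done.
    have H2 : \big[Rplus/0]_(i < n) norm2 (vsub (g i xb) (g i (x k i))) <=
              L ^ 2 * \big[Rplus/0]_(i < n) norm2 (vsub xb (x k i)).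
      rewrite big_distrr /=; apply: sum_le => i.
      have Hl := HLipL i xb (x k i).
      have Hn1 := norm_ge0 (vsub (g i xb) (g i (x k i))).
      have Hn2 := norm_ge0 (vsub xb (x k i)).
      rewrite -!norm_sq. nra.
    have H3 : \big[Rplus/0]_(i < n) norm2 (vsub xb (x k i)) <= Bd ^ 2.
      apply: Rle_trans (Hcons k).
      rewrite /norm2 /dot exchange_big /=; apply: Req_le; apply: eq_bigr => c _; apply: eq_bigr => i _.
      have Em : xb c = mean (fun j => x k j c) by [].
      rewrite /vsub Em; ring.
    have HS0 : 0 <= \big[Rplus/0]_(i < n) norm2 (vsub xb (x k i)) by apply: sum_ge0 => i; exact: norm2_ge0.
    have HS1 : 0 <= \big[Rplus/0]_(i < n) norm2 (vsub (g i xb) (g i (x k i))) by apply: sum_ge0 => i; exact: norm2_ge0.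
    have Hinv : alpha ^ 2 / INR n <= alpha ^ 2.
      apply: (Rmult_le_reg_r (INR n)) => //.
      have -> : alpha ^ 2 / INR n * INR n = alpha ^ 2 by field; lra.
      nra.
    have Ha2 : 0 <= alpha ^ 2 / INR n by apply: Rmult_le_pos; [nra | apply: Rlt_le; apply: Rinv_0_lt_compat; lra].
    apply: (Rle_trans _ _ _ H1).
    apply: (Rle_trans _ (alpha ^ 2 / INR n * (L ^ 2 * Bd ^ 2))).
      apply: Rmult_le_compat_l => //; apply: Rle_trans H2 _; apply: Rmult_le_compat_l => //; nra.
    have : 0 <= L ^ 2 * Bd ^ 2 by nra.
    nra.
  have HNP := norm2_ge0 P.
  have HNX := norm2_ge0 (vsub xb xstar).
  have E1 : c1sq delta = (1 + alpha * delta) * (1 - alpha * (2 * mu_f * L_f / (mu_f + L_f))).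
    rewrite /c1sq /c2; ring.
  have Hbt1 : 0 < 1 - beta ^ t by lra.
  have E2 : c3sq delta / (1 - beta ^ t) ^ 2 = (1 + / (alpha * delta)) * (alpha ^ 2 * L ^ 2 * Bd ^ 2).
    rewrite /c3sq /Bd; field; repeat split; lra.
  rewrite E1 E2.
  have Hid : 0 < / (alpha * delta) by apply: Rinv_0_lt_compat; nra.
  apply: (Rle_trans _ _ _ Hy).
  apply: Rplus_le_compat.
    rewrite Rmult_assoc; apply: Rmult_le_compat_l; [nra | exact: HP].
  apply: Rmult_le_compat_l; [lra | exact: HNe].
split; first exact: Part1.
move=> Hac2 delta c1 c3.
have Hac0 : 0 < alpha * c2 by nra.
have Hdelta : 0 < delta by rewrite /delta; apply: Rdiv_lt_0_compat; lra.
have Ec1 : c1sq delta = 1 - alpha * c2 / 2 by rewrite /c1sq /delta; field; lra.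
set r := 1 - alpha * c2 / 2 in Ec1 *.
have Hr : 0 < r < 1 by rewrite /r; lra.
have Hc1sq : c1 ^ 2 = r by rewrite /c1 /r pow2_sqrt; lra.
have Hc1 : 0 < c1 < 1.
  split; first by rewrite /c1; apply: sqrt_lt_R0; rewrite -/r; lra.
  apply: (Rlt_le_trans _ (sqrt 1)); [rewrite /c1; apply: sqrt_lt_1_alt; lra | rewrite sqrt_1; lra].
split => //; split => // k.
have Hbt1 : 0 < 1 - beta ^ t by lra.
have Hc3 : 0 <= c3sq delta.
  rewrite /c3sq; have : 0 < / delta by apply: Rinv_0_lt_compat.
  move=> Hid; apply: Rmult_le_pos; last nra.
  apply: Rmult_le_pos; last nra.
  apply: Rmult_le_pos; [nra | lra].
set Bq := c3sq delta / (1 - beta ^ t) ^ 2.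
have HBq : 0 <= Bq by rewrite /Bq; apply: Rmult_le_pos => //; apply: Rlt_le; apply: Rinv_0_lt_compat; nra.
have Hseq := seq_bound (N := fun k => norm2 (vsub (xbar (x k)) xstar)) (conj (Rlt_le _ _ (proj1 Hr)) (proj2 Hr)) HBq
   (fun k => ltac:(rewrite -Ec1; exact: Part1 delta Hdelta k)) k.
simpl in Hseq.
set N0 := norm2 (vsub (xbar (x O)) xstar) in Hseq.
have HN0 : 0 <= N0 by exact: norm2_ge0.
have Hrk : 0 <= r ^ k * N0 by apply: Rmult_le_pos => //; apply: pow_le; lra.
have HBr : 0 <= Bq / (1 - r) by apply: Rmult_le_pos => //; apply: Rlt_le; apply: Rinv_0_lt_compat; lra.
rewrite /norm.
apply: Rle_trans (sqrt_le_1_alt _ _ Hseq) _.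
apply: Rle_trans (sqrt_add_le Hrk HBr) _.
have Hc1k : 0 <= c1 ^ k by apply: pow_le; lra.
apply: Rplus_le_compat; apply: Req_le.
  have -> : r ^ k * N0 = (c1 ^ k) ^ 2 * N0 by rewrite -Hc1sq -!pow_mult Nat.mul_comm.
  rewrite sqrt_mult_alt; last nra.
  by rewrite sqrt_pow2.
have Hs : 0 < sqrt (1 - c1 ^ 2) by apply: sqrt_lt_R0; lra.
have Hs2 : sqrt (1 - c1 ^ 2) ^ 2 = 1 - c1 ^ 2 by rewrite pow2_sqrt; lra.
have Hc32 : c3 ^ 2 = c3sq delta by rewrite /c3 pow2_sqrt.
have Hc30 : 0 <= c3 by apply: sqrt_pos.
have -> : Bq / (1 - r) = (c3 / (sqrt (1 - c1 ^ 2) * (1 - beta ^ t))) ^ 2.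
  rewrite /Bq -Hc32 -Hc1sq.
  move: Hs Hs2; set sq := sqrt (1 - c1 ^ 2) => Hs Hs2.
  rewrite -Hs2; field; split; lra.
rewrite sqrt_pow2 //.
apply: Rmult_le_pos => //; apply: Rlt_le; apply: Rinv_0_lt_compat; nra.
Qed.
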